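(* Let $\pm_{123},\pm_1,\pm_2,\pm_3\in\{+,-\}$ and $\varphi(n_1,n_2,n_3)=\pm_{123}\langle n_1+n_2+n_3\rangle\pm_1\langle n_1\rangle\pm_2\langle n_2\rangle\pm_3\langle n_3\rangle$. Let $N_1,N_2,N_3,N_{12},N_{123}\ge1$ and $m\in\mathbb Z$. Writing $n_{12}=n_1+n_2$, $n_{123}=n_1+n_2+n_3$, all sets below consist of triples $(n_1,n_2,n_3)\in(\mathbb Z^3)^3$ with $|\varphi(n_1,n_2,n_3)-m|\le1$ and the stated constraints: (i) $\#\{|n_1|\sim N_1,|n_2|\sim N_2,|n_3|\sim N_3\}\lesssim\mathrm{med}(N_1,N_2,N_3)^{-1}(N_1N_2N_3)^3$; (ii) $\#\{|n_{123}|\sim N_{123},|n_1|\sim N_1,|n_2|\sim N_2\}\lesssim\mathrm{med}(N_{123},N_1,N_2)^{-1}(N_{123}N_1N_2)^3$; (iii) $\#\{|n_{123}|\sim N_{123},|n_{12}|\sim N_{12},|n_1|\sim N_1\}\lesssim\min(N_{12},\max(N_{123},N_1))^{-1}(N_{123}N_{12}N_1)^3$; (iv) $\#\{|n_{12}|\sim N_{12},|n_1|\sim N_1,|n_3|\sim N_3\}\lesssim\min(N_{12},\max(N_1,N_3))^{-1}(N_{12}N_1N_3)^3$.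
   Context: $\langle n\rangle=(1+|n|^2)^{1/2}$; $\mathrm{med}$ denotes the median of three numbers. For a fixed absolute constant $c\ge2$, ''$|n|\sim N$'' means $|n|\le c$ if $N=1$ and $c^{-1}N\le|n|\le cN$ if $N\ge2$. Implicit constants are absolute (independent of $m$, the signs and the dyadic scales). *)

(* Defs.v *)
From Stdlib Require Import Reals Lra ZArith List.
Open Scope R_scope.

Definition Z3 : Type := (Z * Z * Z)%type.

Definition vadd (a b : Z3) : Z3 :=
  match a, b with (a1, a2, a3), (b1, b2, b3) => ((a1 + b1)%Z, (a2 + b2)%Z, (a3 + b3)%Z) end.

Definition znorm (n : Z3) : R :=
  match n with (a, b, c) => sqrt (IZR a ^ 2 + IZR b ^ 2 + IZR c ^ 2) end.

Definition jb (n : Z3) : R := sqrt (1 + znorm n ^ 2).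

Definition sgn (s : bool) : R := if s then 1 else -1.

Definition phi (s123 s1 s2 s3 : bool) (n1 n2 n3 : Z3) : R :=
  sgn s123 * jb (vadd (vadd n1 n2) n3) + sgn s1 * jb n1 + sgn s2 * jb n2
  + sgn s3 * jb n3.

(* |n| ~ N with the fixed constant c:
   |n| <= c if N = 1, and c^-1 N <= |n| <= c N if N >= 2 *)
Definition sim (c N : R) (n : Z3) : Prop :=
  (N = 1 /\ znorm n <= c) \/ (2 <= N /\ N / c <= znorm n /\ znorm n <= c * N).

Definition med (a b c : R) : R := Rmax (Rmin a b) (Rmin (Rmax a b) c).

(* #{x | P x} <= X : every finite duplicate-free list of elements of the set
   has length at most X (equivalently: the set is finite with cardinality <= X) *)
Definition card_le {T : Type} (P : T -> Prop) (X : R) : Prop :=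
  forall l : list T, NoDup l -> (forall x, In x l -> P x) -> INR (length l) <= X.

Definition dy (k : nat) : R := 2 ^ k.

(* Main.v *)
Require Import Defs.
From Stdlib Require Import Reals Lra Lia Psatz ZArith List Classical.
Open Scope R_scope.


Lemma card_le_nonneg {T} (P : T -> Prop) X : card_le P X -> 0 <= X.
Proof. intros H. specialize (H nil (NoDup_nil _) (fun x H => False_ind _ H)). simpl in H. lra. Qed.

Lemma card_le_mono {T} (P Q : T -> Prop) X :
  (forall x, P x -> Q x) -> card_le Q X -> card_le P X.
Proof. intros HPQ H l Hl Hin. apply H; auto. Qed.

Lemma card_le_weak {T} (P : T -> Prop) X Y : X <= Y -> card_le P X -> card_le P Y.
Proof. intros HXY H l Hl Hin. specialize (H l Hl Hin). lra. Qed.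

Lemma card_le_empty {T} (P : T -> Prop) X : (forall x, ~ P x) -> 0 <= X -> card_le P X.
Proof.
  intros HP HX l Hl Hin. destruct l as [|a l]. simpl; lra.
  exfalso. apply (HP a). apply Hin. left; auto.
Qed.

Lemma partition_list {T} (P Q : T -> Prop) (l : list T) :
  NoDup l -> (forall x, In x l -> P x \/ Q x) ->
  exists l1 l2, NoDup l1 /\ NoDup l2 /\ (forall x, In x l1 -> P x /\ In x l) /\
    (forall x, In x l2 -> Q x /\ In x l) /\ length l = (length l1 + length l2)%nat /\
    (forall x, In x l -> In x l1 \/ In x l2).
Proof.
  induction l as [|a l IH]; intros Hnd Hin.
  - exists nil, nil. simpl. refine (conj _ (conj _ (conj _ (conj _ (conj _ _))))); try constructor; tauto.
  - inversion Hnd as [|a0 l0 Hna Hnd']; subst a0 l0.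
    destruct IH as (l1 & l2 & H1 & H2 & H3 & H4 & H5 & H6); auto.
    { intros x Hx. apply Hin. right; auto. }
    destruct (classic (P a)) as [Pa|nPa].
    + exists (a :: l1), l2. refine (conj _ (conj _ (conj _ (conj _ (conj _ _))))).
      * constructor; auto. intros Ha. apply Hna. apply (H3 a Ha).
      * auto.
      * intros x [<-|Hx]; [split; [auto|left; auto]|]. split; [apply H3; auto|right; apply H3; auto].
      * intros x Hx; split; [apply H4; auto|right; apply H4; auto].
      * simpl. lia.
      * intros x [<-|Hx]; [left; left; auto|]. destruct (H6 x Hx); [left; right|right]; auto.
    + assert (Qa : Q a). { destruct (Hin a) as [h|h]; [left; auto | tauto | auto]. }
      exists l1, (a :: l2). refine (conj _ (conj _ (conj _ (conj _ (conj _ _))))).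
      * auto.
      * constructor; auto. intros Ha. apply Hna. apply (H4 a Ha).
      * intros x Hx; split; [apply H3; auto|right; apply H3; auto].
      * intros x [<-|Hx]; [split; [auto|left; auto]|]. split; [apply H4; auto|right; apply H4; auto].
      * simpl. lia.
      * intros x [<-|Hx]; [right; left; auto|]. destruct (H6 x Hx); [left|right; right]; auto.
Qed.

Lemma card_le_union {T} (P Q : T -> Prop) X Y :
  card_le P X -> card_le Q Y -> card_le (fun x => P x \/ Q x) (X + Y).
Proof.
  intros HP HQ l Hl Hin.
  destruct (partition_list P Q l Hl Hin) as (l1 & l2 & H1 & H2 & H3 & H4 & H5 & _).
  rewrite H5, plus_INR.
  specialize (HP l1 H1 (fun x h => proj1 (H3 x h))).
  specialize (HQ l2 H2 (fun x h => proj1 (H4 x h))). lra.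
Qed.

Lemma card_le_union' {T} (P Q S : T -> Prop) X Y :
  (forall x, S x -> P x \/ Q x) ->
  card_le P X -> card_le Q Y -> card_le S (X + Y).
Proof. intros H HP HQ. eapply card_le_mono; [exact H|]. apply card_le_union; auto. Qed.

Fixpoint rsum (g : nat -> R) (n : nat) : R :=
  match n with O => 0 | S n => rsum g n + g n end.

Lemma card_le_cover {T} (P : T -> Prop) (Q : nat -> T -> Prop) (g : nat -> R) n :
  (forall x, P x -> exists j, (j < n)%nat /\ Q j x) ->
  (forall j, (j < n)%nat -> card_le (fun x => P x /\ Q j x) (g j)) ->
  card_le P (rsum g n).
Proof.
  revert P. induction n as [|n IH]; intros P Hc Hf.
  - simpl. apply card_le_empty; [|lra]. intros x Px. destruct (Hc x Px) as [j [Hj _]]. lia.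
  - simpl. apply card_le_union' with
      (P := fun x => P x /\ exists j, (j < n)%nat /\ Q j x) (Q := fun x => P x /\ Q n x).
    + intros x Px. destruct (Hc x Px) as [j [Hj HQ]].
      destruct (Nat.eq_dec j n) as [->|Hne]; [right; auto|left; split; auto; exists j; split; auto; lia].
    + apply IH.
      * intros x [Px Hx]; exact Hx.
      * intros j Hj. eapply card_le_mono; [|apply (Hf j); lia]. intros x [[Px _] Qx]; auto.
    + apply Hf; lia.
Qed.

Lemma fiber_aux {T U} (P : T -> Prop) (f : T -> U) (Z : R) :
  0 <= Z ->
  (forall y, card_le (fun x => P x /\ f x = y) Z) ->
  forall n (l : list T), (length l <= n)%nat -> NoDup l -> (forall x, In x l -> P x) ->
  exists bs : list U, NoDup bs /\ (forall b, In b bs -> exists x, In x l /\ f x = b) /\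
    INR (length l) <= INR (length bs) * Z.
Proof.
  intros HZ Hf n. induction n as [|n IH]; intros l Hlen Hnd Hin.
  - destruct l; simpl in *; [|lia]. exists nil. split; [constructor|split; [intros b []|simpl; lra]].
  - destruct l as [|a l'].
    + exists nil. split; [constructor|split; [intros b []|simpl; lra]].
    + destruct (partition_list (fun x => f x = f a) (fun x => f x <> f a) (a :: l') Hnd)
        as (l1 & l2 & H1 & H2 & H3 & H4 & H5 & H6).
      { intros x _. apply classic. }
      assert (Ha1 : In a l1).
      { destruct (H6 a (or_introl eq_refl)) as [h|h]; auto. exfalso. apply (proj1 (H4 a h)); auto. }
      assert (Hl1 : (1 <= length l1)%nat) by (destruct l1; simpl in *; [tauto|lia]).
      assert (Hl2 : (length l2 <= n)%nat) by (simpl in *; lia).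
      destruct (IH l2 Hl2 H2 (fun x h => Hin x (proj2 (H4 x h)))) as (bs & Hbs1 & Hbs2 & Hbs3).
      exists (f a :: bs). refine (conj _ (conj _ _)).
      * constructor; auto. intros Hb. destruct (Hbs2 _ Hb) as [x [Hx Hfx]].
        apply (proj1 (H4 x Hx)); auto.
      * intros b [<-|Hb]; [exists a; split; auto; left; auto|].
        destruct (Hbs2 _ Hb) as [x [Hx Hfx]]. exists x; split; auto. apply (proj2 (H4 x Hx)).
      * rewrite H5, plus_INR. simpl length. rewrite S_INR.
        assert (INR (length l1) <= Z).
        { apply (Hf (f a)); auto. intros x Hx. split; [apply Hin; apply (proj2 (H3 x Hx))|apply (proj1 (H3 x Hx))]. }
        nra.
Qed.

Lemma card_le_fiber {T U} (P : T -> Prop) (f : T -> U) (Y Z : R) :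
  0 <= Z ->
  card_le (fun y => exists x, P x /\ f x = y) Y ->
  (forall y, card_le (fun x => P x /\ f x = y) Z) ->
  card_le P (Y * Z).
Proof.
  intros HZ HY Hf l Hl Hin.
  destruct (fiber_aux P f Z HZ Hf (length l) l (le_n _) Hl Hin) as (bs & H1 & H2 & H3).
  assert (INR (length bs) <= Y).
  { apply HY; auto. intros b Hb. destruct (H2 b Hb) as [x [Hx Hfx]]. exists x; auto. }
  nra.
Qed.

Lemma card_le_inj {T U} (P : T -> Prop) (Q : U -> Prop) (g : T -> U) X :
  (forall x y, P x -> P y -> g x = g y -> x = y) ->
  (forall x, P x -> Q (g x)) -> card_le Q X -> card_le P X.
Proof.
  intros Hinj HPQ HQ l Hl Hin.
  rewrite <- (length_map g l). apply HQ.
  - clear HQ HPQ. induction l as [|a l IH]; simpl; constructor.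
    + intros Hm. apply in_map_iff in Hm. destruct Hm as [x [Hgx Hx]].
      inversion Hl; subst. apply Hinj in Hgx; [subst; tauto| |]; apply Hin; simpl; auto.
    + inversion Hl; subst. apply IH; auto. intros x Hx; apply Hin; right; auto.
  - intros y Hy. apply in_map_iff in Hy. destruct Hy as [x [<- Hx]]. apply HPQ, Hin; auto.
Qed.

Definition flo (r : R) : Z := (up r - 1)%Z.

Lemma flo_spec r : IZR (flo r) <= r < IZR (flo r) + 1.
Proof.
  unfold flo. destruct (archimed r) as [H1 H2]. rewrite minus_IZR. simpl. split; lra.
Qed.

Lemma flo_nonneg r : 0 <= r -> (0 <= flo r)%Z.
Proof. intros H. destruct (flo_spec r). assert (IZR (flo r) > IZR (-1)) by (simpl; lra).
  apply lt_IZR in H2. lia. Qed.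

Lemma card_le_nat_lt (n : nat) : card_le (fun k : nat => (k < n)%nat) (INR n).
Proof.
  intros l Hl Hin. apply le_INR. rewrite <- (length_seq n 0).
  apply NoDup_incl_length; auto. intros k Hk. apply in_seq. specialize (Hin k Hk). lia.
Qed.

Lemma card_le_Zrange (m : Z) (n : nat) :
  card_le (fun z : Z => (m <= z < m + Z.of_nat n)%Z) (INR n).
Proof.
  apply card_le_inj with (Q := fun k : nat => (k < n)%nat) (g := fun z => Z.to_nat (z - m)).
  - intros x y Hx Hy Hxy. lia.
  - intros x Hx. lia.
  - apply card_le_nat_lt.
Qed.

Lemma card_le_interval (a b : R) :
  a <= b + 2 -> card_le (fun z : Z => a <= IZR z <= b) (b - a + 2).
Proof.
  intros Hab.
  destruct (archimed a) as [Ha1 Ha2]. destruct (archimed b) as [Hb1 Hb2].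
  set (m := (up a - 1)%Z). set (n := Z.to_nat (up b - m)).
  apply card_le_weak with (INR n).
  - unfold n. destruct (Z_le_gt_dec 0 (up b - m)) as [h|h].
    + rewrite INR_IZR_INZ, Z2Nat.id by lia. unfold m. rewrite !minus_IZR. simpl. lra.
    + replace (Z.to_nat (up b - m)) with 0%nat by lia. simpl. lra.
  - eapply card_le_mono; [|apply (card_le_Zrange m n)].
    intros z [H1 H2]. unfold n.
    assert (Hm : (m <= z)%Z).
    { apply le_IZR. unfold m. rewrite minus_IZR. simpl. lra. }
    assert (Hz : (z < up b)%Z). { apply lt_IZR. lra. }
    rewrite Z2Nat.id by lia. lia.
Qed.

Lemma card_le_prod {A B} (P : A -> Prop) (Q : B -> Prop) X Y :
  card_le P X -> card_le Q Y -> card_le (fun p : A * B => P (fst p) /\ Q (snd p)) (X * Y).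
Proof.
  intros HP HQ. apply card_le_fiber with (f := fst).
  - eapply card_le_nonneg; eauto.
  - eapply card_le_mono; [|exact HP]. intros y [x [[Hx _] <-]]; auto.
  - intros y. apply card_le_inj with (Q := Q) (g := snd).
    + intros [x1 x2] [y1 y2] [_ H1] [_ H2] H. simpl in *. subst. auto.
    + intros x [[_ Hx] _]; auto.
    + auto.
Qed.


Definition cx (v : Z3) : R := match v with (a, _, _) => IZR a end.
Definition cy (v : Z3) : R := match v with (_, b, _) => IZR b end.
Definition cz (v : Z3) : R := match v with (_, _, c) => IZR c end.
Definition nsq (v : Z3) : R := cx v ^ 2 + cy v ^ 2 + cz v ^ 2.
Definition dot (u v : Z3) : R := cx u * cx v + cy u * cy v + cz u * cz v.
Definition vopp (v : Z3) : Z3 := match v with (a, b, c) => ((- a)%Z, (- b)%Z, (- c)%Z) end.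
Definition vsub (u v : Z3) : Z3 := vadd u (vopp v).

Lemma nsq_nonneg v : 0 <= nsq v.
Proof. unfold nsq. nra. Qed.

Lemma znorm_eq v : znorm v = sqrt (nsq v).
Proof. destruct v as [[a b] c]. reflexivity. Qed.

Lemma znorm_nonneg v : 0 <= znorm v.
Proof. rewrite znorm_eq. apply sqrt_pos. Qed.

Lemma znorm_sq v : znorm v ^ 2 = nsq v.
Proof. rewrite znorm_eq. simpl. rewrite Rmult_1_r. apply sqrt_sqrt, nsq_nonneg. Qed.

Lemma jb_sq v : jb v ^ 2 = 1 + nsq v.
Proof. unfold jb. rewrite znorm_sq. simpl. rewrite Rmult_1_r. apply sqrt_sqrt. pose proof (nsq_nonneg v); lra. Qed.

Lemma jb_nonneg v : 0 <= jb v.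
Proof. unfold jb. apply sqrt_pos. Qed.

Lemma jb_ge v : znorm v <= jb v.
Proof.
  pose proof (znorm_sq v). pose proof (jb_sq v). pose proof (znorm_nonneg v). pose proof (jb_nonneg v).
  nra.
Qed.

Lemma jb_le v : jb v <= znorm v + 1.
Proof.
  pose proof (znorm_sq v). pose proof (jb_sq v). pose proof (znorm_nonneg v). pose proof (jb_nonneg v).
  nra.
Qed.

Lemma cx_add u v : cx (vadd u v) = cx u + cx v.
Proof. destruct u as [[a b] c], v as [[d e] f]; simpl; apply plus_IZR. Qed.
Lemma cy_add u v : cy (vadd u v) = cy u + cy v.
Proof. destruct u as [[a b] c], v as [[d e] f]; simpl; apply plus_IZR. Qed.
Lemma cz_add u v : cz (vadd u v) = cz u + cz v.
Proof. destruct u as [[a b] c], v as [[d e] f]; simpl; apply plus_IZR. Qed.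
Lemma cx_opp v : cx (vopp v) = - cx v.
Proof. destruct v as [[a b] c]; simpl; apply opp_IZR. Qed.
Lemma cy_opp v : cy (vopp v) = - cy v.
Proof. destruct v as [[a b] c]; simpl; apply opp_IZR. Qed.
Lemma cz_opp v : cz (vopp v) = - cz v.
Proof. destruct v as [[a b] c]; simpl; apply opp_IZR. Qed.

Lemma nsq_add u v : nsq (vadd u v) = nsq u + 2 * dot u v + nsq v.
Proof. unfold nsq, dot. rewrite cx_add, cy_add, cz_add. ring. Qed.

Lemma nsq_opp v : nsq (vopp v) = nsq v.
Proof. unfold nsq. rewrite cx_opp, cy_opp, cz_opp. ring. Qed.

Lemma znorm_opp v : znorm (vopp v) = znorm v.
Proof. rewrite !znorm_eq, nsq_opp. auto. Qed.

Lemma jb_opp v : jb (vopp v) = jb v.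
Proof. unfold jb. rewrite znorm_opp. auto. Qed.

Lemma cauchy u v : dot u v <= znorm u * znorm v.
Proof.
  pose proof (znorm_sq u). pose proof (znorm_sq v). pose proof (znorm_nonneg u). pose proof (znorm_nonneg v).
  assert (dot u v ^ 2 <= nsq u * nsq v).
  { unfold dot, nsq.
    assert (E : (cx u ^ 2 + cy u ^ 2 + cz u ^ 2) * (cx v ^ 2 + cy v ^ 2 + cz v ^ 2) -
      (cx u * cx v + cy u * cy v + cz u * cz v) ^ 2 =
      (cx u * cy v - cy u * cx v) ^ 2 + (cx u * cz v - cz u * cx v) ^ 2 + (cy u * cz v - cz u * cy v) ^ 2) by ring.
    pose proof (pow2_ge_0 (cx u * cy v - cy u * cx v)).
    pose proof (pow2_ge_0 (cx u * cz v - cz u * cx v)).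
    pose proof (pow2_ge_0 (cy u * cz v - cz u * cy v)). lra. }
  assert (0 <= znorm u * znorm v) by nra.
  assert (dot u v ^ 2 <= (znorm u * znorm v) ^ 2) by (rewrite Rpow_mult_distr, H, H0; auto).
  destruct (Rle_lt_dec (dot u v) (znorm u * znorm v)); auto. nra.
Qed.

Lemma znorm_triangle u v : znorm (vadd u v) <= znorm u + znorm v.
Proof.
  pose proof (znorm_sq (vadd u v)). rewrite nsq_add in H.
  pose proof (znorm_sq u). pose proof (znorm_sq v). pose proof (znorm_nonneg u). pose proof (znorm_nonneg v).
  pose proof (znorm_nonneg (vadd u v)). pose proof (cauchy u v). nra.
Qed.

Lemma cx_le v : Rabs (cx v) <= znorm v.
Proof. pose proof (znorm_sq v). pose proof (znorm_nonneg v). unfold nsq in H.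
  apply Rsqr_le_abs_1 in H0 || idtac. unfold Rabs; destruct Rcase_abs; nra. Qed.
Lemma cy_le v : Rabs (cy v) <= znorm v.
Proof. pose proof (znorm_sq v). pose proof (znorm_nonneg v). unfold nsq in H.
  unfold Rabs; destruct Rcase_abs; nra. Qed.
Lemma cz_le v : Rabs (cz v) <= znorm v.
Proof. pose proof (znorm_sq v). pose proof (znorm_nonneg v). unfold nsq in H.
  unfold Rabs; destruct Rcase_abs; nra. Qed.

Definition supn (v : Z3) : Z := match v with (a, b, c) => Z.max (Z.abs a) (Z.max (Z.abs b) (Z.abs c)) end.

Lemma supn_nonneg v : (0 <= supn v)%Z.
Proof. destruct v as [[a b] c]. simpl. lia. Qed.

Lemma supn_zero v : supn v = 0%Z -> v = (0%Z, 0%Z, 0%Z).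
Proof. destruct v as [[a b] c]. simpl. intros H. f_equal; [f_equal|]; lia. Qed.

Lemma nsq_le_supn v : nsq v <= 3 * IZR (supn v) ^ 2.
Proof.
  destruct v as [[a b] c]. unfold nsq; simpl cx; simpl cy; simpl cz. simpl supn.
  assert (Ha : (Z.abs a <= Z.max (Z.abs a) (Z.max (Z.abs b) (Z.abs c)))%Z) by lia.
  assert (Hb : (Z.abs b <= Z.max (Z.abs a) (Z.max (Z.abs b) (Z.abs c)))%Z) by lia.
  assert (Hc : (Z.abs c <= Z.max (Z.abs a) (Z.max (Z.abs b) (Z.abs c)))%Z) by lia.
  set (M := Z.max (Z.abs a) (Z.max (Z.abs b) (Z.abs c))) in *.
  apply IZR_le in Ha, Hb, Hc. rewrite abs_IZR in Ha, Hb, Hc.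
  assert (IZR a ^ 2 <= IZR M ^ 2) by (rewrite <- (pow2_abs (IZR a)); pose proof (Rabs_pos (IZR a)); nra).
  assert (IZR b ^ 2 <= IZR M ^ 2) by (rewrite <- (pow2_abs (IZR b)); pose proof (Rabs_pos (IZR b)); nra).
  assert (IZR c ^ 2 <= IZR M ^ 2) by (rewrite <- (pow2_abs (IZR c)); pose proof (Rabs_pos (IZR c)); nra).
  lra.
Qed.

Lemma znorm_le_supn v : znorm v <= 2 * IZR (supn v).
Proof.
  pose proof (nsq_le_supn v). pose proof (znorm_sq v). pose proof (znorm_nonneg v).
  pose proof (supn_nonneg v). apply IZR_le in H2. nra.
Qed.

Lemma supn_le_znorm v : IZR (supn v) <= znorm v.
Proof.
  pose proof (cx_le v). pose proof (cy_le v). pose proof (cz_le v).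
  destruct v as [[a b] c]. simpl in *. rewrite <- !abs_IZR in *.
  destruct (Z.max_spec (Z.abs a) (Z.max (Z.abs b) (Z.abs c))) as [[_ ->]|[_ ->]];
  [destruct (Z.max_spec (Z.abs b) (Z.abs c)) as [[_ ->]|[_ ->]]|]; auto.
Qed.


Lemma rsum_le (f g : nat -> R) n : (forall j, (j < n)%nat -> f j <= g j) -> rsum f n <= rsum g n.
Proof. induction n; simpl; intros H; [lra|]. pose proof (H n (Nat.lt_succ_diag_r n)).
  assert (rsum f n <= rsum g n) by (apply IHn; intros; apply H; lia). lra. Qed.

Lemma rsum_plus (f g : nat -> R) n : rsum (fun j => f j + g j) n = rsum f n + rsum g n.
Proof. induction n; simpl; [lra|]. rewrite IHn. lra. Qed.

Lemma rsum_scal (f : nat -> R) c n : rsum (fun j => c * f j) n = c * rsum f n.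
Proof. induction n; simpl; [lra|]. rewrite IHn. lra. Qed.

Lemma rsum_const c n : rsum (fun _ => c) n = INR n * c.
Proof. induction n; simpl rsum; [simpl; lra|]. rewrite IHn, S_INR. lra. Qed.

Lemma rsum_nonneg (f : nat -> R) n : (forall j, (j < n)%nat -> 0 <= f j) -> 0 <= rsum f n.
Proof. intros H. apply Rle_trans with (rsum (fun _ => 0) n).
  rewrite rsum_const; lra. apply rsum_le; auto. Qed.

Definition hsq (j : nat) : R := match j with O => 0 | _ => / sqrt (INR j) end.

Lemma sum_hsq m : rsum hsq (S m) <= 2 * sqrt (INR m).
Proof.
  induction m.
  - simpl. rewrite sqrt_0. lra.
  - change (rsum hsq (S (S m))) with (rsum hsq (S m) + hsq (S m)).
    unfold hsq at 2.
    pose proof (sqrt_pos (INR m)) as Ha. pose proof (sqrt_sqrt (INR m) (pos_INR m)) as Ha2.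
    pose proof (sqrt_pos (INR (S m))) as Hb. pose proof (sqrt_sqrt (INR (S m)) (pos_INR (S m))) as Hb2.
    rewrite S_INR in Hb2 |- *.
    assert (Hbp : 0 < sqrt (INR m + 1)) by (apply sqrt_lt_R0; pose proof (pos_INR m); lra).
    assert (2 * sqrt (INR m) + / sqrt (INR m + 1) <= 2 * sqrt (INR m + 1)).
    { apply Rmult_le_reg_r with (sqrt (INR m + 1)); auto.
      rewrite Rmult_plus_distr_r, Rinv_l by lra. nra. }
    lra.
Qed.

Lemma sq_le_le x y : 0 <= y -> x * x <= y * y -> x <= y.
Proof. intros Hy H. destruct (Rle_lt_dec x y); auto. nra. Qed.

Lemma row_count (a x0 Lo Hi : R) :
  1 <= a -> 0 <= Hi -> Lo <= Hi ->
  card_le (fun x : Z => Lo <= a * (IZR x - x0) ^ 2 <= Hi)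
    (4 + 2 * (sqrt (Hi / a) - sqrt (Rmax 0 Lo / a))).
Proof.
  intros Ha HHi HLo.
  set (r1 := sqrt (Hi / a)). set (r0 := sqrt (Rmax 0 Lo / a)).
  assert (Hr1 : 0 <= r1) by apply sqrt_pos. assert (Hr0 : 0 <= r0) by apply sqrt_pos.
  assert (Hr1s : r1 * r1 = Hi / a) by (apply sqrt_sqrt; apply Rle_mult_inv_pos; lra).
  assert (Hr0s : r0 * r0 = Rmax 0 Lo / a) by (apply sqrt_sqrt; apply Rle_mult_inv_pos; [apply Rmax_l|lra]).
  assert (Hr01 : r0 <= r1).
  { apply sqrt_le_1_alt. apply Rmult_le_compat_r; [left; apply Rinv_0_lt_compat; lra|].
    apply Rmax_lub; lra. }
  replace (4 + 2 * (r1 - r0)) with ((x0 - r0 - (x0 - r1) + 2) + (x0 + r1 - (x0 + r0) + 2)) by ring.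
  apply card_le_union' with (P := fun x : Z => x0 - r1 <= IZR x <= x0 - r0)
                            (Q := fun x : Z => x0 + r0 <= IZR x <= x0 + r1).
  - intros x [H1 H2]. set (t := IZR x - x0) in *.
    assert (Ht1 : t * t <= r1 * r1).
    { rewrite Hr1s. apply Rmult_le_reg_l with a; [lra|]. field_simplify; lra. }
    assert (Ht0 : r0 * r0 <= t * t).
    { rewrite Hr0s. apply Rmult_le_reg_l with a; [lra|]. field_simplify; [|lra].
      apply Rmax_lub; nra. }
    destruct (Rle_lt_dec t 0).
    + left. unfold t in *. split; nra.
    + right. unfold t in *. split; nra.
  - apply card_le_interval. lra.
  - apply card_le_interval. lra.
Qed.

Lemma row_gap1 (a Lo Hi : R) : 1 <= a -> 0 <= Hi -> Lo <= Hi ->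
  sqrt (Hi / a) - sqrt (Rmax 0 Lo / a) <= sqrt (Hi - Lo).
Proof.
  intros Ha HHi HLo.
  set (r1 := sqrt (Hi / a)). set (r0 := sqrt (Rmax 0 Lo / a)).
  assert (Hr1 : 0 <= r1) by apply sqrt_pos. assert (Hr0 : 0 <= r0) by apply sqrt_pos.
  assert (Hr1s : r1 * r1 = Hi / a) by (apply sqrt_sqrt; apply Rle_mult_inv_pos; lra).
  assert (Hr0s : r0 * r0 = Rmax 0 Lo / a) by (apply sqrt_sqrt; apply Rle_mult_inv_pos; [apply Rmax_l|lra]).
  assert (Hr01 : r0 <= r1).
  { apply sqrt_le_1_alt. apply Rmult_le_compat_r; [left; apply Rinv_0_lt_compat; lra|].
    apply Rmax_lub; lra. }
  assert (Hd : r1 * r1 - r0 * r0 <= Hi - Lo).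
  { rewrite Hr1s, Hr0s. unfold Rdiv. rewrite <- Rmult_minus_distr_r.
    assert (Hi - Rmax 0 Lo <= Hi - Lo) by (pose proof (Rmax_r 0 Lo); lra).
    assert (0 <= Hi - Rmax 0 Lo) by (apply Rmax_case; lra).
    assert (0 < / a <= 1) by (split; [apply Rinv_0_lt_compat; lra|rewrite <- Rinv_1; apply Rinv_le_contravar; lra]).
    nra. }
  assert (Hs : sqrt ((r1 - r0) * (r1 - r0)) <= sqrt (Hi - Lo)) by (apply sqrt_le_1_alt; nra).
  rewrite sqrt_square in Hs by lra. lra.
Qed.

Lemma row_gap2 (a Lo Hi : R) : 1 <= a -> 0 < Hi -> Lo <= Hi ->
  sqrt (Hi / a) - sqrt (Rmax 0 Lo / a) <= (Hi - Lo) / sqrt Hi.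
Proof.
  intros Ha HHi HLo.
  set (r1 := sqrt (Hi / a)). set (r0 := sqrt (Rmax 0 Lo / a)).
  assert (Hr1 : 0 <= r1) by apply sqrt_pos. assert (Hr0 : 0 <= r0) by apply sqrt_pos.
  assert (Hr1s : r1 * r1 = Hi / a) by (apply sqrt_sqrt; apply Rle_mult_inv_pos; lra).
  assert (Hr0s : r0 * r0 = Rmax 0 Lo / a) by (apply sqrt_sqrt; apply Rle_mult_inv_pos; [apply Rmax_l|lra]).
  assert (Hr01 : r0 <= r1).
  { apply sqrt_le_1_alt. apply Rmult_le_compat_r; [left; apply Rinv_0_lt_compat; lra|].
    apply Rmax_lub; lra. }
  assert (Hd : a * (r1 * r1 - r0 * r0) <= Hi - Lo).
  { rewrite Hr1s, Hr0s. field_simplify; [|lra].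
    pose proof (Rmax_r 0 Lo). lra. }
  set (sH := sqrt Hi). assert (HsH : sH * sH = Hi) by (apply sqrt_sqrt; lra).
  assert (HsHp : 0 < sH) by (apply sqrt_lt_R0; lra).
  (* r1 = sH / sqrt a ; (r1 - r0) * r1 <= (Hi-Lo)/a ; r1 * a >= sH since r1^2 a^2 = Hi a >= Hi *)
  assert (Hr1a : sH <= a * r1).
  { assert (sH * sH <= (a * r1) * (a * r1)).
    { replace ((a * r1) * (a * r1)) with (a * a * (r1 * r1)) by ring. rewrite Hr1s, HsH.
      field_simplify; [|lra]. nra. }
    apply sq_le_le; nra. }
  apply Rmult_le_reg_r with sH; auto.
  unfold Rdiv. rewrite Rmult_assoc, Rinv_l by lra. rewrite Rmult_1_r.
  assert ((r1 - r0) * r1 <= (r1 - r0) * (r1 + r0)) by nra.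
  nra.
Qed.

Definition Qf (al be ga x y : R) : R := x ^ 2 + y ^ 2 + (ga - al * x - be * y) ^ 2.
Definition aa (al : R) : R := 1 + al ^ 2.
Definition kk (al be : R) : R := 1 + be ^ 2 / aa al.
Definition yy1 (al be ga : R) : R := be * ga / (aa al * kk al be).
Definition RR0 (al be ga : R) : R := ga ^ 2 / (aa al * kk al be).
Definition xx0 (al be ga y : R) : R := al * (ga - be * y) / aa al.

Lemma aa_ge1 al : 1 <= aa al.
Proof. unfold aa. nra. Qed.
Lemma kk_ge1 al be : 1 <= kk al be.
Proof. unfold kk. pose proof (aa_ge1 al). assert (0 <= be ^ 2 / aa al) by (apply Rle_mult_inv_pos; nra). lra. Qed.
Lemma RR0_nonneg al be ga : 0 <= RR0 al be ga.
Proof. unfold RR0. pose proof (aa_ge1 al). pose proof (kk_ge1 al be). apply Rle_mult_inv_pos; nra. Qed.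

Lemma Q_decomp al be ga x y :
  Qf al be ga x y = aa al * (x - xx0 al be ga y) ^ 2 + kk al be * (y - yy1 al be ga) ^ 2 + RR0 al be ga.
Proof.
  pose proof (aa_ge1 al). pose proof (kk_ge1 al be).
  unfold Qf, xx0, yy1, RR0. unfold kk in *. unfold aa in *. field. split; nra.
Qed.

Lemma flo_mono x y : x <= y -> (flo x <= flo y)%Z.
Proof. intros H. destruct (flo_spec x), (flo_spec y).
  assert (IZR (flo x) < IZR (flo y + 1)) by (rewrite plus_IZR; simpl; lra).
  apply lt_IZR in H4. lia. Qed.

Definition e0 (j : nat) : R := match j with O => 1 | _ => 0 end.
Lemma rsum_e0 m : rsum e0 (S m) = 1.
Proof. induction m; simpl in *; [lra|]. rewrite IHm. lra. Qed.

Lemma sqrt_le_half D : 0 <= D -> sqrt D <= (1 + D) / 2.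
Proof. intros H. pose proof (sqrt_pos D). pose proof (sqrt_sqrt D H). pose proof (pow2_ge_0 (sqrt D - 1)). nra. Qed.

Lemma half_count al be ga A B : 0 <= B -> A <= B ->
  card_le (fun p : Z * Z => A <= Qf al be ga (IZR (fst p)) (IZR (snd p)) <= B /\ yy1 al be ga <= IZR (snd p))
    (18 * (1 + sqrt B + (B - A))).
Proof.
  intros HB HAB.
  pose proof (aa_ge1 al) as Ha. pose proof (kk_ge1 al be) as Hk. pose proof (RR0_nonneg al be ga) as HR.
  set (a := aa al) in *. set (k := kk al be) in *. set (y1 := yy1 al be ga) in *. set (R0 := RR0 al be ga) in *.
  set (D := B - A).
  assert (HD : 0 <= D) by (unfold D; lra).
  assert (Hfin : 0 <= 18 * (1 + sqrt B + D)) by (pose proof (sqrt_pos B); lra).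
  destruct (Rlt_le_dec (B - R0) 0) as [HB0|HB0].
  { apply card_le_empty; auto. intros [x y] [[H1 H2] _]. simpl in H2. rewrite Q_decomp in H2.
    fold a k y1 R0 in H2.
    pose proof (pow2_ge_0 (IZR x - xx0 al be ga (IZR y))). pose proof (pow2_ge_0 (IZR y - y1)). nra. }
  set (B0 := B - R0) in *.
  set (s := sqrt (B0 / k)).
  assert (Hs0 : 0 <= s) by apply sqrt_pos.
  assert (Hss : s * s = B0 / k) by (apply sqrt_sqrt; apply Rle_mult_inv_pos; lra).
  assert (HsB : s <= sqrt B).
  { apply sqrt_le_1_alt. apply Rle_trans with B0; [|unfold B0; lra].
    unfold Rdiv. rewrite <- (Rmult_1_r B0) at 2. apply Rmult_le_compat_l; auto.
    rewrite <- Rinv_1. apply Rinv_le_contravar; lra. }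
  set (yp := y1 + s).
  assert (Hrange : forall x y : Z, A <= Qf al be ga (IZR x) (IZR y) <= B -> y1 <= IZR y ->
            0 <= yp - IZR y <= s /\ k * (IZR y - y1) ^ 2 + R0 <= B /\
            A - (k * (IZR y - y1) ^ 2 + R0) <= a * (IZR x - xx0 al be ga (IZR y)) ^ 2 <= B - (k * (IZR y - y1) ^ 2 + R0)).
  { intros x y [H1 H2] H3. rewrite Q_decomp in H1, H2. fold a k y1 R0 in H1, H2.
    pose proof (pow2_ge_0 (IZR x - xx0 al be ga (IZR y))). pose proof (pow2_ge_0 (IZR y - y1)).
    assert (Hy : (IZR y - y1) * (IZR y - y1) <= s * s).
    { rewrite Hss. apply Rmult_le_reg_l with k; [lra|]. field_simplify; [|lra]. unfold B0. nra. }
    assert (IZR y - y1 <= s) by (apply sq_le_le; auto).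
    unfold yp. repeat split; nra. }
  set (m := Z.to_nat (flo s)).
  set (rb := fun j : nat => 4 + 2 * (if (j =? 0)%nat then sqrt D else D / (sqrt (INR j) * sqrt s))).
  assert (Hjs : forall j, (j < S m)%nat -> (j <> 0)%nat -> 1 <= s /\ 1 <= INR j /\ INR j <= s).
  { intros j Hj Hj0. assert (1 <= INR j) by (apply (le_INR 1); lia).
    assert (INR j <= IZR (flo s)).
    { rewrite INR_IZR_INZ. apply IZR_le. unfold m in Hj. pose proof (flo_nonneg s Hs0). lia. }
    pose proof (flo_spec s). lra. }
  apply card_le_weak with (rsum (fun j => 3 * rb j) (S m)).
  2:{
    apply card_le_cover with (Q := fun j (p : Z * Z) => Z.to_nat (flo (yp - IZR (snd p))) = j).
    - intros [x y] [H1 H3]. simpl in *. exists (Z.to_nat (flo (yp - IZR y))). split; auto.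
      destruct (Hrange x y H1 H3) as [[Hq1 Hq2] _].
      pose proof (flo_mono _ _ Hq2). pose proof (flo_nonneg _ Hq1). unfold m. lia.
    - intros j Hj.
      apply card_le_fiber with (f := snd) (Y := 3).
      + unfold rb. destruct (Nat.eqb_spec j 0); [pose proof (sqrt_pos D); lra|].
        destruct (Hjs j Hj n) as [Hs1 [Hj1 _]].
        assert (0 <= D / (sqrt (INR j) * sqrt s)).
        { apply Rle_mult_inv_pos; auto. apply Rmult_lt_0_compat; apply sqrt_lt_R0; lra. }
        lra.
      + replace 3 with ((yp - INR j) - (yp - INR j - 1) + 2) by ring.
        eapply card_le_mono; [|apply card_le_interval; lra].
        intros y [[x' y'] [[[H1 H3] H4] H5]]. simpl in H1, H3, H4, H5. subst y'.
        destruct (Hrange x' y H1 H3) as [[Hq1 Hq2] _].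
        pose proof (flo_spec (yp - IZR y)). pose proof (flo_nonneg _ Hq1).
        assert (E : IZR (flo (yp - IZR y)) = INR j).
        { rewrite <- H4, INR_IZR_INZ, Z2Nat.id; auto. }
        lra.
      + intros y.
        destruct (classic (exists p, ((A <= Qf al be ga (IZR (fst p)) (IZR (snd p)) <= B /\ y1 <= IZR (snd p)) /\
            Z.to_nat (flo (yp - IZR (snd p))) = j) /\ snd p = y)) as [[[x0' y0'] [[[H1 H3] H4] H5]]|Hno].
        2:{ apply card_le_empty. intros p Hp. apply Hno. exists p; auto.
            unfold rb. destruct (Nat.eqb_spec j 0); [pose proof (sqrt_pos D); lra|].
            destruct (Hjs j Hj n) as [Hs1 [Hj1 _]].
            assert (0 <= D / (sqrt (INR j) * sqrt s)).
            { apply Rle_mult_inv_pos; auto. apply Rmult_lt_0_compat; apply sqrt_lt_R0; lra. }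
            lra. }
        simpl in H1, H3, H4, H5. subst y0'.
        destruct (Hrange x0' y H1 H3) as [[Hq1 Hq2] [HRy _]].
        set (Ry := k * (IZR y - y1) ^ 2 + R0) in *.
        apply card_le_inj with (Q := fun x : Z => A - Ry <= a * (IZR x - xx0 al be ga (IZR y)) ^ 2 <= B - Ry)
          (g := fst).
        * intros [p1 p2] [q1 q2] [_ E1] [_ E2] E. simpl in *. subst. auto.
        * intros [x' y'] [[[H1' H3'] _] E]. simpl in H1', H3', E. subst y'.
          destruct (Hrange x' y H1' H3') as [_ [_ HH]]. exact HH.
        * eapply card_le_weak.
          2:{ apply row_count. exact Ha. lra. lra. }
          unfold rb. destruct (Nat.eqb_spec j 0) as [Hj0|Hj0].
          -- pose proof (row_gap1 a (A - Ry) (B - Ry) Ha ltac:(lra) ltac:(lra)) as Hg.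
             replace (B - Ry - (A - Ry)) with D in Hg by (unfold D; ring). lra.
          -- destruct (Hjs j Hj Hj0) as [Hs1 [Hj1 Hjs']].
             assert (Hfl : IZR (flo (yp - IZR y)) = INR j).
             { pose proof (flo_nonneg _ Hq1). rewrite <- H4, INR_IZR_INZ, Z2Nat.id; auto. }
             pose proof (flo_spec (yp - IZR y)).
             assert (Hdel : 0 <= IZR y - y1 <= s - INR j) by (unfold yp in *; lra).
             assert (HBy : INR j * s <= B - Ry).
             { unfold Ry. replace (B - (k * (IZR y - y1) ^ 2 + R0)) with (k * (s * s - (IZR y - y1) ^ 2))
                 by (rewrite Hss; unfold B0; field; lra).
               assert (INR j * s <= s * s - (IZR y - y1) ^ 2) by nra.
               assert (0 <= s * s - (IZR y - y1) ^ 2) by nra. nra. }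
             assert (Hpos : 0 < B - Ry) by nra.
             pose proof (row_gap2 a (A - Ry) (B - Ry) Ha Hpos ltac:(lra)) as Hg.
             replace (B - Ry - (A - Ry)) with D in Hg by (unfold D; ring).
             assert (D / sqrt (B - Ry) <= D / (sqrt (INR j) * sqrt s)).
             { rewrite <- sqrt_mult by lra. unfold Rdiv. apply Rmult_le_compat_l; auto.
               apply Rinv_le_contravar. apply sqrt_lt_R0; nra. apply sqrt_le_1_alt; auto. }
             lra.
  }
  apply Rle_trans with (rsum (fun j => 12 + 6 * sqrt D * e0 j + (6 * (D / sqrt s)) * hsq j) (S m)).
  { apply rsum_le. intros j Hj. unfold rb. destruct (Nat.eqb_spec j 0) as [->|Hj0].
    - simpl. lra.
    - destruct j as [|j']; [lia|]. simpl e0. unfold hsq.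
      destruct (Hjs (S j') Hj Hj0) as [Hs1 [Hj1 _]].
      assert (0 < sqrt s) by (apply sqrt_lt_R0; lra).
      assert (0 < sqrt (INR (S j'))) by (apply sqrt_lt_R0; lra).
      unfold Rdiv. rewrite Rinv_mult. lra. }
  rewrite !rsum_plus, rsum_const, !rsum_scal, rsum_e0.
  assert (Hm : INR m <= s).
  { unfold m. pose proof (flo_nonneg s Hs0). rewrite INR_IZR_INZ, Z2Nat.id by auto. pose proof (flo_spec s). lra. }
  assert (Hh : 6 * (D / sqrt s) * rsum hsq (S m) <= 12 * D).
  { pose proof (sum_hsq m). destruct m as [|m'].
    - simpl. unfold hsq. lra.
    - assert (1 <= s) by (rewrite S_INR in Hm; pose proof (pos_INR m'); lra).
      assert (0 < sqrt s) by (apply sqrt_lt_R0; lra).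
      assert (sqrt (INR (S m')) <= sqrt s) by (apply sqrt_le_1_alt; auto).
      assert (0 <= rsum hsq (S (S m'))) by (apply rsum_nonneg; intros [|jj] _; unfold hsq; [lra|];
        left; apply Rinv_0_lt_compat, sqrt_lt_R0; rewrite S_INR; pose proof (pos_INR jj); lra).
      apply Rle_trans with (6 * (D / sqrt s) * (2 * sqrt s)).
      + apply Rmult_le_compat_l; [apply Rmult_le_pos; [lra|apply Rle_mult_inv_pos; auto]|lra].
      + field_simplify; lra. }
  rewrite S_INR. pose proof (sqrt_le_half D HD). lra.
Qed.


Lemma annulus2 al be ga A B : 0 <= B -> A <= B ->
  card_le (fun p : Z * Z => A <= Qf al be ga (IZR (fst p)) (IZR (snd p)) <= B)
    (36 * (1 + sqrt B + (B - A))).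
Proof.
  intros HB HAB.
  replace (36 * (1 + sqrt B + (B - A))) with (18 * (1 + sqrt B + (B - A)) + 18 * (1 + sqrt B + (B - A))) by ring.
  apply card_le_union' with
    (P := fun p : Z * Z => A <= Qf al be ga (IZR (fst p)) (IZR (snd p)) <= B /\ yy1 al be ga <= IZR (snd p))
    (Q := fun p : Z * Z => A <= Qf al be ga (IZR (fst p)) (IZR (snd p)) <= B /\ IZR (snd p) <= yy1 al be ga).
  - intros p H. destruct (Rle_lt_dec (yy1 al be ga) (IZR (snd p))); [left|right]; split; auto; lra.
  - apply half_count; auto.
  - apply card_le_inj with
      (Q := fun p : Z * Z => A <= Qf al (- be) ga (IZR (fst p)) (IZR (snd p)) <= B /\ yy1 al (- be) ga <= IZR (snd p))
      (g := fun p : Z * Z => (fst p, (- snd p)%Z)).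
    + intros [a b] [c d] _ _ E. inversion E. f_equal. lia.
    + intros [x y] [H1 H2]. simpl in *. rewrite opp_IZR.
      assert (E1 : Qf al (- be) ga (IZR x) (- IZR y) = Qf al be ga (IZR x) (IZR y)) by (unfold Qf; ring).
      assert (E2 : yy1 al (- be) ga = - yy1 al be ga) by (unfold yy1, kk; rewrite pow2_abs, <- (pow2_abs be) || idtac;
        unfold Rdiv; replace ((- be) ^ 2) with (be ^ 2) by ring; ring).
      rewrite E1, E2. split; auto; lra.
    + apply half_count; auto.
Qed.


Lemma uzc (u : Z3) (r H : R) :
  0 <= r -> (Z.abs (fst (fst u)) <= Z.abs (snd u))%Z -> (Z.abs (snd (fst u)) <= Z.abs (snd u))%Z ->
  snd u <> 0%Z ->
  card_le (fun v : Z3 => r <= znorm v <= r + 1 /\ H <= dot u v <= H + Rabs (cz u)) (1080 * (r + 1)).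
Proof.
  intros Hr Hu1 Hu2 Hu3.
  destruct u as [[u1 u2] u3]. simpl in Hu1, Hu2, Hu3.
  set (e := IZR u3).
  assert (He : e <> 0) by (apply not_0_IZR; auto).
  set (al := IZR u1 / e). set (be := IZR u2 / e). set (ga := H / e).
  apply card_le_weak with ((36 * (1 + sqrt ((r + 2) ^ 2) + ((r + 2) ^ 2 - (r ^ 2 - 2 * r - 3)))) * 3).
  { rewrite sqrt_pow2 by lra. nra. }
  apply card_le_fiber with (f := fun v : Z3 => (fst (fst v), snd (fst v))).
  - lra.
  - eapply card_le_mono; [|apply (annulus2 al be ga (r ^ 2 - 2 * r - 3) ((r + 2) ^ 2)); nra].
    intros [x y] [[[a b] t] [[Hn Hd] E]]. simpl in E. inversion E; subst a b. simpl fst; simpl snd.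
    simpl in Hd. unfold dot in Hd; simpl cx in Hd; simpl cy in Hd; simpl cz in Hd.
    pose proof (znorm_sq (x, y, t)) as Hs. unfold nsq in Hs; simpl cx in Hs; simpl cy in Hs; simpl cz in Hs.
    pose proof (znorm_nonneg (x, y, t)).
    set (n := znorm (x, y, t)) in *.
    set (t0 := ga - al * IZR x - be * IZR y).
    assert (Ht0 : Rabs (IZR t - t0) <= 1).
    { unfold t0, ga, al, be.
      assert (Hl : IZR t - (H / e - IZR u1 / e * IZR x - IZR u2 / e * IZR y) =
           (IZR u1 * IZR x + IZR u2 * IZR y + e * IZR t - H) / e) by (field; auto).
      rewrite Hl. unfold Rdiv. rewrite Rabs_mult, Rabs_inv.
      fold e in Hd.
      assert (Hz : Rabs (IZR u1 * IZR x + IZR u2 * IZR y + e * IZR t - H) <= Rabs e).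
      { rewrite Rabs_pos_eq by lra. lra. }
      assert (0 < Rabs e) by (apply Rabs_pos_lt; auto).
      apply Rmult_le_reg_r with (Rabs e); auto. rewrite Rmult_assoc, Rinv_l by lra. lra. }
    assert (Htn : Rabs (IZR t) <= r + 1).
    { pose proof (cz_le (x, y, t)). simpl cz in H1. fold n in H1. lra. }
    unfold Qf. fold t0.
    assert (Ht2 : Rabs (IZR t ^ 2 - t0 ^ 2) <= 2 * r + 3).
    { replace (IZR t ^ 2 - t0 ^ 2) with ((IZR t - t0) * (IZR t + t0)) by ring.
      rewrite Rabs_mult. assert (Rabs (IZR t + t0) <= 2 * r + 3).
      { replace (IZR t + t0) with (2 * IZR t - (IZR t - t0)) by ring.
        eapply Rle_trans; [apply Rabs_triang|]. rewrite Rabs_Ropp, Rabs_mult, Rabs_pos_eq by lra. lra. }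
      pose proof (Rabs_pos (IZR t - t0)). pose proof (Rabs_pos (IZR t + t0)). nra. }
    apply Rabs_le_between in Ht2 || (unfold Rabs in Ht2; destruct (Rcase_abs (IZR t ^ 2 - t0 ^ 2))).
    all: nra.
  - intros [x y].
    apply card_le_inj with (Q := fun t : Z =>
        (if Rlt_dec 0 e then (H - IZR u1 * IZR x - IZR u2 * IZR y) / e
         else (H - IZR u1 * IZR x - IZR u2 * IZR y) / e - 1) <= IZR t <=
        (if Rlt_dec 0 e then (H - IZR u1 * IZR x - IZR u2 * IZR y) / e
         else (H - IZR u1 * IZR x - IZR u2 * IZR y) / e - 1) + 1)
      (g := fun v : Z3 => snd v).
    + intros [[a b] c] [[a' b'] c'] [_ E1] [_ E2] E. simpl in *. inversion E1; inversion E2; subst. auto.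
    + intros [[a b] t] [[Hn Hd] E]. simpl in E. inversion E; subst a b. simpl snd.
      simpl in Hd. unfold dot in Hd; simpl cx in Hd; simpl cy in Hd; simpl cz in Hd. fold e in Hd.
      destruct (Rlt_dec 0 e) as [Hp|Hn0].
      * rewrite Rabs_pos_eq in Hd by lra. split.
        -- apply Rmult_le_reg_r with e; auto. unfold Rdiv. rewrite Rmult_assoc, Rinv_l by auto. lra.
        -- apply Rmult_le_reg_r with e; auto. rewrite Rmult_plus_distr_r. unfold Rdiv. rewrite Rmult_assoc, Rinv_l by auto. lra.
      * rewrite Rabs_left in Hd by lra. split.
        -- apply Rmult_le_reg_r with (- e); [lra|]. unfold Rdiv.
           replace (((H - IZR u1 * IZR x - IZR u2 * IZR y) * / e - 1) * - e) with
             (- (H - IZR u1 * IZR x - IZR u2 * IZR y) + e) by (field; auto). lra.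
        -- apply Rmult_le_reg_r with (- e); [lra|]. unfold Rdiv.
           replace (((H - IZR u1 * IZR x - IZR u2 * IZR y) * / e - 1 + 1) * - e) with
             (- (H - IZR u1 * IZR x - IZR u2 * IZR y)) by (field; auto). lra.
    + replace 3 with ((1 + 0) + 2) by ring.
      set (lo := if Rlt_dec 0 e then _ else _).
      replace (1 + 0 + 2) with (lo + 1 - lo + 2) by ring. apply card_le_interval. lra.
Qed.

Lemma zc3 (u : Z3) (r H W : R) :
  0 <= r -> 0 <= W -> (Z.abs (fst (fst u)) <= Z.abs (snd u))%Z -> (Z.abs (snd (fst u)) <= Z.abs (snd u))%Z ->
  snd u <> 0%Z ->
  card_le (fun v : Z3 => r <= znorm v <= r + 1 /\ H <= dot u v <= H + W)
    ((W / Rabs (cz u) + 1) * (1080 * (r + 1))).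
Proof.
  intros Hr HW Hu1 Hu2 Hu3.
  assert (He : 0 < Rabs (cz u)).
  { apply Rabs_pos_lt. destruct u as [[a b] c]. simpl in *. apply not_0_IZR; auto. }
  set (d := Rabs (cz u)) in *.
  set (n := S (Z.to_nat (flo (W / d)))).
  assert (HWd : 0 <= W / d) by (apply Rle_mult_inv_pos; lra).
  apply card_le_weak with (rsum (fun _ => 1080 * (r + 1)) n).
  { rewrite rsum_const. unfold n. rewrite S_INR, INR_IZR_INZ, Z2Nat.id by (apply flo_nonneg; auto).
    pose proof (flo_spec (W / d)). apply Rmult_le_compat_r; lra. }
  apply card_le_cover with (Q := fun j v => Z.to_nat (flo ((dot u v - H) / d)) = j).
  - intros v [Hn Hd]. eexists; split; [|reflexivity].
    assert (H0 : 0 <= (dot u v - H) / d) by (apply Rle_mult_inv_pos; lra).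
    assert (H1 : (dot u v - H) / d <= W / d) by (apply Rmult_le_compat_r; [left; apply Rinv_0_lt_compat|]; lra).
    pose proof (flo_mono _ _ H1). pose proof (flo_nonneg _ H0). unfold n. lia.
  - intros j Hj. eapply card_le_mono; [|apply (uzc u r (H + INR j * d)); auto].
    intros v [[Hn Hd] Ej]. split; auto.
    assert (H0 : 0 <= (dot u v - H) / d) by (apply Rle_mult_inv_pos; lra).
    pose proof (flo_spec ((dot u v - H) / d)). pose proof (flo_nonneg _ H0).
    assert (E : IZR (flo ((dot u v - H) / d)) = INR j) by (rewrite <- Ej, INR_IZR_INZ, Z2Nat.id; auto).
    rewrite E in H1.
    assert (E2 : (dot u v - H) / d * d = dot u v - H) by (field; lra).
    fold d. split; nra.
Qed.

Definition perm1 (v : Z3) : Z3 := match v with (a, b, c) => (b, c, a) end.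
Definition perm2 (v : Z3) : Z3 := match v with (a, b, c) => (a, c, b) end.

Lemma znorm_perm1 v : znorm (perm1 v) = znorm v.
Proof. rewrite !znorm_eq. f_equal. destruct v as [[a b] c]. unfold nsq. simpl. ring. Qed.
Lemma znorm_perm2 v : znorm (perm2 v) = znorm v.
Proof. rewrite !znorm_eq. f_equal. destruct v as [[a b] c]. unfold nsq. simpl. ring. Qed.
Lemma dot_perm1 u v : dot (perm1 u) (perm1 v) = dot u v.
Proof. destruct u as [[a b] c], v as [[x y] z]. unfold dot. simpl. ring. Qed.
Lemma dot_perm2 u v : dot (perm2 u) (perm2 v) = dot u v.
Proof. destruct u as [[a b] c], v as [[x y] z]. unfold dot. simpl. ring. Qed.

Lemma zc (u : Z3) (r H W : R) :
  0 <= r -> 0 <= W -> u <> (0%Z, 0%Z, 0%Z) ->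
  card_le (fun v : Z3 => r <= znorm v <= r + 1 /\ H <= dot u v <= H + W)
    ((W / IZR (supn u) + 1) * (1080 * (r + 1))).
Proof.
  intros Hr HW Hu0.
  destruct u as [[a b] c].
  assert (Hs : (1 <= supn (a, b, c))%Z).
  { pose proof (supn_nonneg (a, b, c)). destruct (Z.eq_dec (supn (a, b, c)) 0) as [E|E].
    - apply supn_zero in E. contradiction. - lia. }
  simpl supn in *.
  destruct (Z.max_spec (Z.abs a) (Z.max (Z.abs b) (Z.abs c))) as [[Hm E]|[Hm E]]; rewrite E in *.
  - destruct (Z.max_spec (Z.abs b) (Z.abs c)) as [[Hm2 E2]|[Hm2 E2]]; rewrite E2 in *.
    +
      replace (IZR (Z.abs c)) with (Rabs (cz (a, b, c))) by (simpl; symmetry; apply abs_IZR).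
      apply zc3; simpl; auto; lia.
    +
      apply card_le_inj with (g := perm2)
        (Q := fun v : Z3 => r <= znorm v <= r + 1 /\ H <= dot (perm2 (a, b, c)) v <= H + W).
      * intros [[x1 x2] x3] [[y1 y2] y3] _ _ E3. simpl in E3. inversion E3. auto.
      * intros v [H1 H2]. rewrite znorm_perm2, dot_perm2. auto.
      * replace (IZR (Z.abs b)) with (Rabs (cz (perm2 (a, b, c)))) by (simpl; symmetry; apply abs_IZR).
        apply zc3; simpl; auto; lia.
  -
    apply card_le_inj with (g := perm1)
      (Q := fun v : Z3 => r <= znorm v <= r + 1 /\ H <= dot (perm1 (a, b, c)) v <= H + W).
    * intros [[x1 x2] x3] [[y1 y2] y3] _ _ E3. simpl in E3. inversion E3. auto.
    * intros v [H1 H2]. rewrite znorm_perm1, dot_perm1. auto.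
    * replace (IZR (Z.abs a)) with (Rabs (cz (perm1 (a, b, c)))) by (simpl; symmetry; apply abs_IZR).
      apply zc3; simpl; auto; lia.
Qed.


Lemma sign_sq (s : R) : (s = 1 \/ s = -1) -> s * s = 1.
Proof. intros [-> | ->]; ring. Qed.

Lemma sign_abs (s : R) : (s = 1 \/ s = -1) -> Rabs s = 1.
Proof. intros [-> | ->]; unfold Rabs; destruct Rcase_abs; lra. Qed.

Lemma Rabs_sub_le x y : Rabs (x - y) <= Rabs x + Rabs y.
Proof. unfold Rminus. eapply Rle_trans; [apply Rabs_triang|]. rewrite Rabs_Ropp. lra. Qed.

Lemma Rabs_le_inv x y : Rabs x <= y -> - y <= x <= y.
Proof. unfold Rabs; destruct Rcase_abs; intros; lra. Qed.

Lemma slab_fiber (u v : Z3) (sg tau b r : R) :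
  (sg = 1 \/ sg = -1) -> (tau = 1 \/ tau = -1) -> 0 <= r ->
  r <= znorm v <= r + 1 -> Rabs (sg * jb (vadd u v) + tau * jb v - b) <= 1 ->
  let a := sg * (b - tau * (r + 1)) - 3 in
  0 <= a + 5 /\ a <= znorm u + r + 1 /\
  (Rmax a 0) ^ 2 - znorm u ^ 2 - (r + 1) ^ 2 <= 2 * dot u v <= (a + 5) ^ 2 - znorm u ^ 2 - r ^ 2.
Proof.
  intros Hs Ht Hr Hv Hw a.
  pose proof (jb_ge v). pose proof (jb_le v). pose proof (jb_ge (vadd u v)). pose proof (jb_le (vadd u v)).
  pose proof (sign_sq _ Hs). pose proof (sign_sq _ Ht).
  set (X := jb (vadd u v)) in *. set (Y := jb v) in *.
  assert (HY : Rabs (Y - (r + 1)) <= 1) by (apply Rabs_le; lra).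
  assert (HX : Rabs (X - sg * (b - tau * (r + 1))) <= 2).
  { replace (X - sg * (b - tau * (r + 1))) with (sg * ((sg * X + tau * Y - b) - tau * (Y - (r + 1))))
      by (replace (sg * ((sg * X + tau * Y - b) - tau * (Y - (r + 1)))) with
           ((sg * sg) * X + sg * tau * Y - sg * b - sg * tau * Y + sg * tau * (r + 1)) by ring;
          rewrite H3; ring).
    rewrite Rabs_mult. rewrite (sign_abs sg Hs).
    rewrite Rmult_1_l. eapply Rle_trans; [apply Rabs_sub_le|]. rewrite Rabs_mult.
    rewrite (sign_abs tau Ht).
    lra. }
  pose proof (znorm_nonneg (vadd u v)). pose proof (znorm_triangle u v).
  pose proof (znorm_nonneg u).
  set (sN := znorm (vadd u v)) in *.
  assert (Hsn : a <= sN <= a + 5).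
  { unfold a. destruct (Rabs_le_inv _ _ HX). lra. }
  assert (Hsq : sN ^ 2 = znorm u ^ 2 + 2 * dot u v + znorm v ^ 2).
  { unfold sN. rewrite !znorm_sq. apply nsq_add. }
  split; [lra|]. split; [lra|].
  assert (Hm : Rmax a 0 <= sN) by (apply Rmax_lub; lra).
  assert (Hm0 : 0 <= Rmax a 0) by apply Rmax_r.
  split.
  - assert (Rmax a 0 ^ 2 <= sN ^ 2) by nra. assert (znorm v ^ 2 <= (r + 1) ^ 2) by nra. lra.
  - assert (sN ^ 2 <= (a + 5) ^ 2) by nra. assert (r ^ 2 <= znorm v ^ 2) by nra. lra.
Qed.

Lemma cl_main (u : Z3) (sg tau b M : R) :
  (sg = 1 \/ sg = -1) -> (tau = 1 \/ tau = -1) -> 1 <= M -> u <> (0%Z, 0%Z, 0%Z) ->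
  card_le (fun v : Z3 => znorm v <= M /\ Rabs (sg * jb (vadd u v) + tau * jb v - b) <= 1)
    (103680 * (M ^ 2 + M ^ 3 / IZR (supn u))).
Proof.
  intros Hs Ht HM Hu.
  assert (Hsup : 1 <= IZR (supn u)).
  { apply IZR_le. pose proof (supn_nonneg u). destruct (Z.eq_dec (supn u) 0) as [E|E].
    - apply supn_zero in E. contradiction. - lia. }
  set (sp := IZR (supn u)) in *.
  pose proof (znorm_le_supn u) as Hdu. fold sp in Hdu.
  set (n := S (Z.to_nat (flo M))).
  set (g := fun k : nat => ((5 * znorm u + 6 * INR k + 18) / sp + 1) * (1080 * (INR k + 1))).
  apply card_le_weak with (rsum g n).
  2:{
    apply card_le_cover with (Q := fun k v => Z.to_nat (flo (znorm v)) = k).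
    - intros v [Hv _]. eexists; split; [|reflexivity].
      pose proof (flo_mono _ _ Hv). pose proof (flo_nonneg _ (znorm_nonneg v)). unfold n. lia.
    - intros k Hk.
      set (r := INR k).
      assert (Hr : 0 <= r) by apply pos_INR.
      set (a := sg * (b - tau * (r + 1)) - 3).
      destruct (classic (0 <= a + 5 /\ a <= znorm u + r + 1)) as [[Ha1 Ha2]|Hna].
      + set (lo := (Rmax a 0) ^ 2 - znorm u ^ 2 - (r + 1) ^ 2).
        eapply card_le_mono; [|apply (zc u r (lo / 2) (5 * znorm u + 6 * r + 18)); auto].
        * intros v [[Hv Hw] Ek].
          assert (Hrv : r <= znorm v <= r + 1).
          { pose proof (flo_spec (znorm v)). pose proof (flo_nonneg _ (znorm_nonneg v)).
            assert (E : IZR (flo (znorm v)) = r) by (unfold r; rewrite <- Ek, INR_IZR_INZ, Z2Nat.id; auto).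
            lra. }
          destruct (slab_fiber u v sg tau b r Hs Ht Hr Hrv Hw) as [_ [_ [Hl1 Hl2]]].
          fold a in Hl1, Hl2. fold lo in Hl1.
          split; auto. split; [lra|].
          assert (Hhl : (a + 5) ^ 2 - znorm u ^ 2 - r ^ 2 - lo <= 10 * znorm u + 12 * r + 36).
          { unfold lo. pose proof (znorm_nonneg u).
            destruct (Rle_lt_dec 0 a).
            - rewrite Rmax_left by lra. nra.
            - rewrite Rmax_right by lra. nra. }
          lra.
        * pose proof (znorm_nonneg u). lra.
      + apply card_le_empty.
        * intros v [[Hv Hw] Ek]. apply Hna.
          assert (Hrv : r <= znorm v <= r + 1).
          { pose proof (flo_spec (znorm v)). pose proof (flo_nonneg _ (znorm_nonneg v)).
            assert (E : IZR (flo (znorm v)) = r) by (unfold r; rewrite <- Ek, INR_IZR_INZ, Z2Nat.id; auto).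
            lra. }
          destruct (slab_fiber u v sg tau b r Hs Ht Hr Hrv Hw) as [H1 [H2 _]]. auto.
        * unfold g. fold r. pose proof (znorm_nonneg u).
          assert (0 <= (5 * znorm u + 6 * r + 18) / sp) by (apply Rle_mult_inv_pos; lra). nra.
  }
  assert (HnM : INR n <= M + 1).
  { unfold n. rewrite S_INR, INR_IZR_INZ, Z2Nat.id by (apply flo_nonneg; lra). pose proof (flo_spec M). lra. }
  apply Rle_trans with (rsum (fun _ => ((10 * sp + 6 * M + 18) / sp + 1) * (1080 * (M + 1))) n).
  { apply rsum_le. intros k Hk. unfold g.
    assert (HkM : INR k <= M).
    { assert (INR k <= IZR (flo M)).
      { rewrite INR_IZR_INZ. apply IZR_le. unfold n in Hk. pose proof (flo_nonneg M ltac:(lra)). lia. }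
      pose proof (flo_spec M). lra. }
    pose proof (pos_INR k). pose proof (znorm_nonneg u).
    apply Rmult_le_compat; try lra.
    - assert (0 <= (5 * znorm u + 6 * INR k + 18) / sp) by (apply Rle_mult_inv_pos; lra). lra.
    - apply Rplus_le_compat_r. unfold Rdiv. apply Rmult_le_compat_r; [left; apply Rinv_0_lt_compat; lra|]. lra. }
  rewrite rsum_const.
  assert (Hsp : 0 < sp) by lra.
  assert (E : (10 * sp + 6 * M + 18) / sp + 1 = 11 + (6 * M + 18) / sp) by (field; lra).
  rewrite E.
  assert (Hq : (6 * M + 18) / sp <= 24 * (M / sp)).
  { unfold Rdiv. rewrite <- Rmult_assoc. apply Rmult_le_compat_r; [left; apply Rinv_0_lt_compat; lra|]. lra. }
  assert (HMs : 0 <= M / sp) by (apply Rle_mult_inv_pos; lra).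
  assert (E2 : M ^ 3 / sp = M ^ 2 * (M / sp)) by (field; lra).
  rewrite E2.
  assert (0 <= (6 * M + 18) / sp) by (apply Rle_mult_inv_pos; lra).
  pose proof (pos_INR n).
  apply Rle_trans with ((M + 1) * ((11 + 24 * (M / sp)) * (1080 * (M + 1)))).
  { apply Rmult_le_compat; try nra. }
  assert (M + 1 <= 2 * M) by lra.
  assert ((M + 1) * (M + 1) <= 4 * M ^ 2) by nra.
  nra.
Qed.


Lemma card_le_Z3 (P1 P2 P3 : Z -> Prop) X1 X2 X3 :
  card_le P1 X1 -> card_le P2 X2 -> card_le P3 X3 ->
  card_le (fun v : Z3 => let '(a, b, c) := v in P1 a /\ P2 b /\ P3 c) (X1 * X2 * X3).
Proof.
  intros H1 H2 H3.
  eapply card_le_mono; [|apply card_le_prod; [apply card_le_prod; [exact H1|exact H2]|exact H3]].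
  intros [[a b] c] [h1 [h2 h3]]. simpl. auto.
Qed.

Lemma ball_count (R : R) : 0 <= R -> card_le (fun v : Z3 => znorm v <= R) ((2 * R + 2) ^ 3).
Proof.
  intros HR.
  replace ((2 * R + 2) ^ 3) with ((R - - R + 2) * (R - - R + 2) * (R - - R + 2)) by ring.
  eapply card_le_mono; [|apply card_le_Z3; apply card_le_interval; lra].
  intros [[a b] c] H. pose proof (cx_le (a, b, c)). pose proof (cy_le (a, b, c)). pose proof (cz_le (a, b, c)).
  cbn [cx cy cz] in H0, H1, H2.
  destruct (Rabs_le_inv (IZR a) R) as [h1 h2]; [lra|].
  destruct (Rabs_le_inv (IZR b) R) as [h3 h4]; [lra|].
  destruct (Rabs_le_inv (IZR c) R) as [h5 h6]; [lra|].
  repeat split; lra.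
Qed.

Lemma shell_count (k : nat) : card_le (fun w : Z3 => supn w = Z.of_nat k) (48 * (INR k + 1) ^ 2).
Proof.
  set (K := IZR (Z.of_nat k)).
  assert (HK : K = INR k) by (unfold K; rewrite <- INR_IZR_INZ; auto).
  assert (Hint : card_le (fun z : Z => (Z.abs z <= Z.of_nat k)%Z) (2 * INR k + 2)).
  { replace (2 * INR k + 2) with (K - - K + 2) by (rewrite HK; ring).
    eapply card_le_mono; [|apply (card_le_interval (- K) K); rewrite HK; pose proof (pos_INR k); lra].
    intros z Hz. unfold K. rewrite <- opp_IZR. split; apply IZR_le; lia. }
  assert (Hpm : card_le (fun z : Z => Z.abs z = Z.of_nat k) 4).
  { replace 4 with ((K - K + 2) + (- K - - K + 2)) by ring.
    apply card_le_union' with (P := fun z : Z => K <= IZR z <= K) (Q := fun z : Z => - K <= IZR z <= - K).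
    - intros z Hz. destruct (Z.abs_spec z) as [[_ E]|[_ E]]; [left|right]; unfold K; rewrite <- ?opp_IZR;
      split; apply IZR_le; lia.
    - apply card_le_interval; lra.
    - apply card_le_interval; lra. }
  assert (HK0 : 0 <= K) by (rewrite HK; apply pos_INR).
  replace (48 * (INR k + 1) ^ 2) with (4 * (2 * INR k + 2) * (2 * INR k + 2) + ((2 * INR k + 2) * 4 * (2 * INR k + 2)
     + (2 * INR k + 2) * (2 * INR k + 2) * 4)) by ring.
  eapply card_le_mono with (Q := fun w : Z3 => (let '(a, b, c) := w in Z.abs a = Z.of_nat k /\ (Z.abs b <= Z.of_nat k)%Z /\ (Z.abs c <= Z.of_nat k)%Z)
       \/ (let '(a, b, c) := w in (Z.abs a <= Z.of_nat k)%Z /\ Z.abs b = Z.of_nat k /\ (Z.abs c <= Z.of_nat k)%Z)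
       \/ (let '(a, b, c) := w in (Z.abs a <= Z.of_nat k)%Z /\ (Z.abs b <= Z.of_nat k)%Z /\ Z.abs c = Z.of_nat k)).
  - intros [[a b] c] H. simpl in H. lia.
  - apply card_le_union; [apply card_le_Z3; auto|apply card_le_union; apply card_le_Z3; auto].
Qed.

Definition KC : R := 103680.

Lemma cl (u : Z3) (sg tau b M : R) :
  (sg = 1 \/ sg = -1) -> (tau = 1 \/ tau = -1) -> 1 <= M ->
  card_le (fun v : Z3 => znorm v <= M /\ Rabs (sg * jb (vadd u v) + tau * jb v - b) <= 1)
    (KC * (M ^ 2 + M ^ 3 / IZR (Z.max 1 (supn u)))).
Proof.
  intros Hs Ht HM. unfold KC.
  destruct (Z.eq_dec (supn u) 0) as [E|E].
  - rewrite E. change (IZR (Z.max 1 0)) with 1.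
    apply card_le_weak with ((2 * M + 2) ^ 3).
    + unfold Rdiv. rewrite Rinv_1, Rmult_1_r. assert (2 * M + 2 <= 4 * M) by lra.
      assert ((2 * M + 2) ^ 3 <= (4 * M) ^ 3) by (apply pow_incr; lra). nra.
    + eapply card_le_mono; [|apply (ball_count M); lra]. intros v [h _]; auto.
  - assert (Hu : u <> (0%Z, 0%Z, 0%Z)) by (intros ->; simpl in E; lia).
    rewrite Z.max_r by (pose proof (supn_nonneg u); lia). apply cl_main; auto.
Qed.

Definition KA : R := 64 * 48 * 4 * KC.

Lemma assembly (U : Z3 -> Z3 -> Z3) (R1 R2 M : R) (L : nat) (sg tau : R) (F : Z3 -> Z3 -> R) (m : R) :
  1 <= R2 -> 1 <= M -> (sg = 1 \/ sg = -1) -> (tau = 1 \/ tau = -1) ->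
  (forall b a a', U a b = U a' b -> a = a') ->
  (forall a b, znorm a <= R1 -> znorm b <= R2 -> (supn (U a b) <= Z.of_nat L)%Z) ->
  card_le (fun t : Z3 * Z3 * Z3 => let '(a, b, v) := t in
     znorm a <= R1 /\ znorm b <= R2 /\ znorm v <= M /\
     Rabs (sg * jb (vadd (U a b) v) + tau * jb v + F a b - m) <= 1)
   (KA * R2 ^ 3 * ((INR L + 1) ^ 3 * M ^ 2 + (INR L + 1) ^ 2 * M ^ 3)).
Proof.
  intros HR2 HM Hs Ht Hinj HL.
  set (g := fun k : nat => (2 * R2 + 2) ^ 3 * (48 * (INR k + 1) ^ 2) *
              (KC * (M ^ 2 + M ^ 3 / IZR (Z.max 1 (Z.of_nat k))))).
  assert (HKC : 0 < KC) by (unfold KC; lra).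
  assert (Hgz : forall k, 0 <= KC * (M ^ 2 + M ^ 3 / IZR (Z.max 1 (Z.of_nat k)))).
  { intros k. apply Rmult_le_pos; [lra|]. assert (1 <= IZR (Z.max 1 (Z.of_nat k))) by (apply IZR_le; lia).
    assert (0 <= M ^ 3 / IZR (Z.max 1 (Z.of_nat k))) by (apply Rle_mult_inv_pos; [apply pow_le|]; lra).
    nra. }
  apply card_le_weak with (rsum g (S L)).
  2:{
    apply card_le_cover with (Q := fun k (t : Z3 * Z3 * Z3) => Z.to_nat (supn (U (fst (fst t)) (snd (fst t)))) = k).
    - intros [[a b] v] [Ha [Hb _]]. eexists; split; [|reflexivity]. simpl.
      pose proof (HL a b Ha Hb). lia.
    - intros k Hk.
      apply card_le_fiber with (f := fun t : Z3 * Z3 * Z3 => fst t); [apply Hgz| |].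
      + eapply card_le_mono with (Q := fun p : Z3 * Z3 => znorm (snd p) <= R2 /\ supn (U (fst p) (snd p)) = Z.of_nat k).
        * intros [a b] [[[a' b'] v] [[[Ha [Hb _]] Ek] E]]. simpl in E. inversion E; subst a' b'.
          simpl in Ek |- *. split; auto. pose proof (supn_nonneg (U a b)). lia.
        * apply card_le_fiber with (f := fun p : Z3 * Z3 => snd p).
          -- apply card_le_nonneg with (P := fun w : Z3 => supn w = Z.of_nat k). apply shell_count.
          -- eapply card_le_mono; [|apply (ball_count R2); lra].
             intros b [[a b'] [[Hb _] E]]. simpl in E, Hb. subst. auto.
          -- intros b. apply card_le_inj with (Q := fun w : Z3 => supn w = Z.of_nat k)
               (g := fun p : Z3 * Z3 => U (fst p) (snd p)).
             ++ intros [a1 b1] [a2 b2] [_ E1] [_ E2] E. simpl in *. subst. f_equal. eapply Hinj; eauto.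
             ++ intros [a b1] [[_ E1] _]. simpl in *. auto.
             ++ apply shell_count.
      + intros [a b].
        destruct (classic (supn (U a b) = Z.of_nat k)) as [Hk'|Hk'].
        * apply card_le_inj with (g := fun t : Z3 * Z3 * Z3 => snd t)
            (Q := fun v : Z3 => znorm v <= M /\ Rabs (sg * jb (vadd (U a b) v) + tau * jb v - (m - F a b)) <= 1).
          -- intros [[a1 b1] v1] [[a2 b2] v2] [_ E1] [_ E2] E. simpl in E1, E2, E. inversion E1; inversion E2; subst; auto.
          -- intros [[a1 b1] v] [[[_ [_ [Hv Hw]]] _] E]. simpl in E. inversion E; subst a1 b1. simpl.
             split; auto. replace (sg * jb (vadd (U a b) v) + tau * jb v - (m - F a b)) with
               (sg * jb (vadd (U a b) v) + tau * jb v + F a b - m) by ring. auto.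
          -- rewrite <- Hk'. apply cl; auto.
        * apply card_le_empty; [|apply Hgz].
          intros [[a1 b1] v] [[_ Ek] E]. simpl in E. inversion E; subst a1 b1. simpl in Ek.
          apply Hk'. pose proof (supn_nonneg (U a b)). lia.
  }
  apply Rle_trans with (rsum (fun _ => (2 * R2 + 2) ^ 3 * 48 * KC *
     ((INR L + 1) ^ 2 * M ^ 2 + 4 * (INR L + 1) * M ^ 3)) (S L)).
  { apply rsum_le. intros k Hk. unfold g.
    assert (HkL : INR k <= INR L) by (apply le_INR; lia).
    pose proof (pos_INR k).
    assert (Hsq : (INR k + 1) ^ 2 <= (INR L + 1) ^ 2) by (apply pow_incr; lra).
    assert (Hc : (INR k + 1) ^ 2 * (M ^ 3 / IZR (Z.max 1 (Z.of_nat k))) <= 4 * (INR L + 1) * M ^ 3).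
    { assert (HM3 : 0 <= M ^ 3) by (apply pow_le; lra).
      destruct k as [|k'].
      - change (IZR (Z.max 1 (Z.of_nat 0))) with 1. simpl. unfold Rdiv. rewrite Rinv_1. nra.
      - rewrite Z.max_r by lia. rewrite <- INR_IZR_INZ.
        assert (1 <= INR (S k')) by (rewrite S_INR; pose proof (pos_INR k'); lra).
        replace ((INR (S k') + 1) ^ 2 * (M ^ 3 / INR (S k'))) with (((INR (S k') + 1) ^ 2 / INR (S k')) * M ^ 3)
          by (field; lra).
        apply Rmult_le_compat_r; auto.
        apply Rmult_le_reg_r with (INR (S k')); [lra|]. unfold Rdiv. rewrite Rmult_assoc, Rinv_l by lra. nra. }
    assert (HR : 0 <= (2 * R2 + 2) ^ 3) by (apply pow_le; lra).
    replace ((2 * R2 + 2) ^ 3 * (48 * (INR k + 1) ^ 2) * (KC * (M ^ 2 + M ^ 3 / IZR (Z.max 1 (Z.of_nat k)))))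
      with ((2 * R2 + 2) ^ 3 * 48 * KC * ((INR k + 1) ^ 2 * M ^ 2 + (INR k + 1) ^ 2 * (M ^ 3 / IZR (Z.max 1 (Z.of_nat k)))))
      by ring.
    apply Rmult_le_compat_l; [nra|].
    assert (0 <= M ^ 2) by (apply pow_le; lra). nra. }
  rewrite rsum_const, S_INR. unfold KA.
  assert (HR : (2 * R2 + 2) ^ 3 <= 64 * R2 ^ 3).
  { replace (64 * R2 ^ 3) with ((4 * R2) ^ 3) by ring. apply pow_incr; lra. }
  pose proof (pos_INR L).
  assert (H0 : 0 <= M ^ 2) by (apply pow_le; lra). assert (H1 : 0 <= M ^ 3) by (apply pow_le; lra).
  set (l := INR L + 1) in *.
  assert (Hl : 1 <= l) by (unfold l; lra).
  assert (X : 0 <= l ^ 2 * M ^ 2 + 4 * l * M ^ 3) by (assert (0 <= l ^ 2) by (apply pow_le; lra); nra).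
  apply Rle_trans with (l * (64 * R2 ^ 3 * 48 * KC * (l ^ 2 * M ^ 2 + 4 * l * M ^ 3))).
  { apply Rmult_le_compat_l; [lra|]. apply Rmult_le_compat_r; auto. nra. }
  assert (0 <= R2 ^ 3) by (apply pow_le; lra).
  assert (0 <= l ^ 2 * M ^ 3) by (assert (0 <= l ^ 2) by (apply pow_le; lra); nra).
  replace (l * (64 * R2 ^ 3 * 48 * KC * (l ^ 2 * M ^ 2 + 4 * l * M ^ 3))) with
    (64 * 48 * KC * R2 ^ 3 * (l ^ 3 * M ^ 2 + 4 * (l ^ 2 * M ^ 3))) by ring.
  assert (0 <= 64 * 48 * KC * R2 ^ 3) by nra.
  assert (0 <= l ^ 3 * M ^ 2) by (assert (0 <= l ^ 3) by (apply pow_le; lra); nra).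
  nra.
Qed.


Lemma vadd_comm a b : vadd a b = vadd b a.
Proof. destruct a as [[a1 a2] a3], b as [[b1 b2] b3]. simpl. f_equal; [f_equal|]; lia. Qed.
Lemma vadd_assoc a b c : vadd (vadd a b) c = vadd a (vadd b c).
Proof. destruct a as [[a1 a2] a3], b as [[b1 b2] b3], c as [[c1 c2] c3]. simpl. f_equal; [f_equal|]; lia. Qed.

Lemma supn_le_flo (v : Z3) (R : R) : znorm v <= R -> (supn v <= Z.of_nat (Z.to_nat (flo R)))%Z.
Proof.
  intros H. pose proof (supn_le_znorm v). pose proof (flo_spec R). pose proof (supn_nonneg v).
  assert (IZR (supn v) < IZR (flo R + 1)) by (rewrite plus_IZR; simpl; lra).
  apply lt_IZR in H3. lia.
Qed.

Lemma INR_flo (R : R) : 0 <= R -> INR (Z.to_nat (flo R)) <= R.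
Proof. intros H. rewrite INR_IZR_INZ, Z2Nat.id by (apply flo_nonneg; auto). pose proof (flo_spec R). lra. Qed.

Definition PIp (s0 s1 s2 s3 R1 R2 R3 m : R) (x : Z3 * Z3 * Z3) : Prop :=
  let '(x1, x2, x3) := x in
  znorm x1 <= R1 /\ znorm x2 <= R2 /\ znorm x3 <= R3 /\
  Rabs (s0 * jb (vadd (vadd x1 x2) x3) + s1 * jb x1 + s2 * jb x2 + s3 * jb x3 - m) <= 1.

Definition sgnP (s : R) := s = 1 \/ s = -1.

Lemma partI_core (s0 s1 s2 s3 R1 R2 R3 m : R) :
  sgnP s0 -> sgnP s1 -> sgnP s2 -> sgnP s3 ->
  1 <= R2 -> 1 <= R3 -> R2 <= R1 -> R3 <= R1 ->
  card_le (PIp s0 s1 s2 s3 R1 R2 R3 m) (36 * KA * R1 ^ 3 * R2 ^ 3 * R3 ^ 2).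
Proof.
  intros H0 H1 H2 H3 HR2 HR3 H21 H31.
  set (L := Z.to_nat (flo (2 * R1))).
  eapply card_le_weak; [|eapply card_le_mono; [|apply (assembly (fun a b => vadd a b) R1 R2 R3 L s0 s3
      (fun a b => s1 * jb a + s2 * jb b) m); auto]].
  - pose proof (INR_flo (2 * R1) ltac:(lra)). fold L in H. pose proof (pos_INR L).
    assert (HKA : 0 < KA) by (unfold KA, KC; lra).
    set (l := INR L + 1) in *.
    assert (Hl : l <= 3 * R1) by (unfold l; lra).
    assert (Hl1 : 1 <= l) by (unfold l; lra).
    assert (l ^ 3 <= (3 * R1) ^ 3) by (apply pow_incr; lra).
    assert (l ^ 2 <= (3 * R1) ^ 2) by (apply pow_incr; lra).
    assert (0 <= R2 ^ 3) by (apply pow_le; lra). assert (0 <= R3 ^ 2) by (apply pow_le; lra).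
    assert (R3 ^ 3 <= R1 * R3 ^ 2) by (simpl; nra).
    assert (0 <= l ^ 2) by (apply pow_le; lra).
    assert (l ^ 3 * R3 ^ 2 + l ^ 2 * R3 ^ 3 <= 36 * R1 ^ 3 * R3 ^ 2).
    { assert (l ^ 2 * R3 ^ 3 <= (3 * R1) ^ 2 * (R1 * R3 ^ 2)).
      { apply Rmult_le_compat; auto. apply pow_le; lra. }
      assert (l ^ 3 * R3 ^ 2 <= (3 * R1) ^ 3 * R3 ^ 2) by (apply Rmult_le_compat_r; auto).
      simpl in *. nra. }
    assert (0 <= KA * R2 ^ 3) by nra.
    replace (36 * KA * R1 ^ 3 * R2 ^ 3 * R3 ^ 2) with (KA * R2 ^ 3 * (36 * R1 ^ 3 * R3 ^ 2)) by ring.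
    apply Rmult_le_compat_l; auto.
  - intros [[x1 x2] x3] [Ha [Hb [Hc Hd]]]. repeat split; auto.
    replace (s0 * jb (vadd (vadd x1 x2) x3) + s3 * jb x3 + (s1 * jb x1 + s2 * jb x2) - m) with
      (s0 * jb (vadd (vadd x1 x2) x3) + s1 * jb x1 + s2 * jb x2 + s3 * jb x3 - m) by ring. auto.
  - intros b a a' E. destruct a as [[a1 a2] a3], a' as [[c1 c2] c3], b as [[b1 b2] b3]. simpl in E.
    inversion E. f_equal; [f_equal|]; lia.
  - intros a b Ha Hb. apply supn_le_flo.
    eapply Rle_trans; [apply znorm_triangle|]. lra.
Qed.

Lemma swap12 s0 s1 s2 s3 R1 R2 R3 m X :
  card_le (PIp s0 s2 s1 s3 R2 R1 R3 m) X -> card_le (PIp s0 s1 s2 s3 R1 R2 R3 m) X.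
Proof.
  intros H. apply card_le_inj with (g := fun x : Z3 * Z3 * Z3 => let '(x1, x2, x3) := x in (x2, x1, x3)) (Q := PIp s0 s2 s1 s3 R2 R1 R3 m); auto.
  - intros [[a b] c] [[d e] f] _ _ E. inversion E. auto.
  - intros [[x1 x2] x3] [Ha [Hb [Hc Hd]]]. unfold PIp. rewrite (vadd_comm x2 x1). repeat split; auto.
    replace (s0 * jb (vadd (vadd x1 x2) x3) + s2 * jb x2 + s1 * jb x1 + s3 * jb x3 - m) with
      (s0 * jb (vadd (vadd x1 x2) x3) + s1 * jb x1 + s2 * jb x2 + s3 * jb x3 - m) by ring. auto.
Qed.

Lemma swap23 s0 s1 s2 s3 R1 R2 R3 m X :
  card_le (PIp s0 s1 s3 s2 R1 R3 R2 m) X -> card_le (PIp s0 s1 s2 s3 R1 R2 R3 m) X.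
Proof.
  intros H. apply card_le_inj with (g := fun x : Z3 * Z3 * Z3 => let '(x1, x2, x3) := x in (x1, x3, x2)) (Q := PIp s0 s1 s3 s2 R1 R3 R2 m); auto.
  - intros [[a b] c] [[d e] f] _ _ E. inversion E. auto.
  - intros [[x1 x2] x3] [Ha [Hb [Hc Hd]]]. unfold PIp.
    rewrite (vadd_assoc x1 x3 x2), (vadd_comm x3 x2), <- vadd_assoc. repeat split; auto.
    replace (s0 * jb (vadd (vadd x1 x2) x3) + s1 * jb x1 + s3 * jb x3 + s2 * jb x2 - m) with
      (s0 * jb (vadd (vadd x1 x2) x3) + s1 * jb x1 + s2 * jb x2 + s3 * jb x3 - m) by ring. auto.
Qed.

Lemma swap13 s0 s1 s2 s3 R1 R2 R3 m X :
  card_le (PIp s0 s3 s2 s1 R3 R2 R1 m) X -> card_le (PIp s0 s1 s2 s3 R1 R2 R3 m) X.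
Proof.
  intros H. apply card_le_inj with (g := fun x : Z3 * Z3 * Z3 => let '(x1, x2, x3) := x in (x3, x2, x1)) (Q := PIp s0 s3 s2 s1 R3 R2 R1 m); auto.
  - intros [[a b] c] [[d e] f] _ _ E. inversion E. auto.
  - intros [[x1 x2] x3] [Ha [Hb [Hc Hd]]]. unfold PIp.
    replace (vadd (vadd x3 x2) x1) with (vadd (vadd x1 x2) x3).
    2:{ rewrite !vadd_assoc, (vadd_comm x2 x1), (vadd_comm x3 (vadd x1 x2)), vadd_assoc. auto. }
    repeat split; auto.
    replace (s0 * jb (vadd (vadd x1 x2) x3) + s3 * jb x3 + s2 * jb x2 + s1 * jb x1 - m) with
      (s0 * jb (vadd (vadd x1 x2) x3) + s1 * jb x1 + s2 * jb x2 + s3 * jb x3 - m) by ring. auto.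
Qed.

Lemma med_cases a b c :
  (med a b c = c /\ Rmin a b <= c <= Rmax a b) \/
  (med a b c = b /\ Rmin a c <= b <= Rmax a c) \/
  (med a b c = a /\ Rmin b c <= a <= Rmax b c).
Proof.
  unfold med, Rmax, Rmin.
  repeat match goal with
         | |- context [Rle_dec ?x ?y] => destruct (Rle_dec x y)
         | H : context [Rle_dec ?x ?y] |- _ => destruct (Rle_dec x y)
         end; lra.
Qed.

Lemma med_perm1 a b c : med a b c = med c a b.
Proof.
  unfold med, Rmax, Rmin.
  repeat match goal with
         | |- context [Rle_dec ?x ?y] => destruct (Rle_dec x y)
         | H : context [Rle_dec ?x ?y] |- _ => destruct (Rle_dec x y)
         end; lra.
Qed.

Lemma core_N s0 s1 s2 s3 c N1 N2 N3 m :
  sgnP s0 -> sgnP s1 -> sgnP s2 -> sgnP s3 -> 1 <= c ->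
  1 <= N1 -> 1 <= N2 -> 1 <= N3 -> N2 <= N1 -> N3 <= N1 ->
  card_le (PIp s0 s1 s2 s3 (c * N1) (c * N2) (c * N3) m) (36 * KA * c ^ 8 * (N1 ^ 3 * N2 ^ 3 * N3 ^ 2)).
Proof.
  intros H0 H1 H2 H3 Hc HN1 HN2 HN3 H21 H31.
  eapply card_le_weak; [|apply partI_core; auto].
  - right. ring.
  - nra.
  - nra.
  - apply Rmult_le_compat_l; lra.
  - apply Rmult_le_compat_l; lra.
Qed.

Lemma caseA s0 s1 s2 s3 c N1 N2 N3 m :
  sgnP s0 -> sgnP s1 -> sgnP s2 -> sgnP s3 -> 1 <= c ->
  1 <= N1 -> 1 <= N2 -> 1 <= N3 -> Rmin N1 N2 <= N3 <= Rmax N1 N2 ->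
  card_le (PIp s0 s1 s2 s3 (c * N1) (c * N2) (c * N3) m) (36 * KA * c ^ 8 * (N1 ^ 3 * N2 ^ 3 * N3 ^ 2)).
Proof.
  intros H0 H1 H2 H3 Hc HN1 HN2 HN3 [Hm HM].
  destruct (Rle_dec N2 N1).
  - rewrite Rmax_left in HM by lra. apply core_N; auto.
  - rewrite Rmax_right in HM by lra. apply swap12.
    eapply card_le_weak; [|apply core_N; auto; lra]. right; ring.
Qed.

Lemma partI_gen s0 s1 s2 s3 c N1 N2 N3 m :
  sgnP s0 -> sgnP s1 -> sgnP s2 -> sgnP s3 -> 1 <= c ->
  1 <= N1 -> 1 <= N2 -> 1 <= N3 ->
  card_le (PIp s0 s1 s2 s3 (c * N1) (c * N2) (c * N3) m)
    (36 * KA * c ^ 8 * / med N1 N2 N3 * (N1 * N2 * N3) ^ 3).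
Proof.
  intros H0 H1 H2 H3 Hc HN1 HN2 HN3.
  destruct (med_cases N1 N2 N3) as [[E Hm]|[[E Hm]|[E Hm]]]; rewrite E.
  - eapply card_le_weak; [|apply caseA; auto]. right. field. lra.
  - apply swap23. eapply card_le_weak; [|apply caseA; auto]. right. field. lra.
  - apply swap13. eapply card_le_weak; [|apply caseA; auto; rewrite Rmin_comm, Rmax_comm; auto].
    right. field. lra.
Qed.

Lemma asm_a (U : Z3 -> Z3 -> Z3) (R1 R2 M sg tau : R) (F : Z3 -> Z3 -> R) (m : R) :
  1 <= R1 -> 1 <= R2 -> 1 <= M -> sgnP sg -> sgnP tau ->
  (forall b a a', U a b = U a' b -> a = a') -> (forall a b, znorm (U a b) = znorm a) ->
  card_le (fun t : Z3 * Z3 * Z3 => let '(a, b, v) := t in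
     znorm a <= R1 /\ znorm b <= R2 /\ znorm v <= M /\
     Rabs (sg * jb (vadd (U a b) v) + tau * jb v + F a b - m) <= 1)
   (8 * KA * R2 ^ 3 * R1 ^ 2 * M ^ 2 * (R1 + M)).
Proof.
  intros HR1 HR2 HM Hs Ht Hinj Hn.
  set (L := Z.to_nat (flo R1)).
  eapply card_le_weak; [|apply (assembly U R1 R2 M L sg tau F m); auto].
  - pose proof (INR_flo R1 ltac:(lra)). fold L in H. pose proof (pos_INR L).
    assert (HKA : 0 < KA) by (unfold KA, KC; lra).
    set (l := INR L + 1) in *.
    assert (Hl : l <= 2 * R1) by (unfold l; lra).
    assert (Hl1 : 1 <= l) by (unfold l; lra).
    assert (l ^ 3 <= (2 * R1) ^ 3) by (apply pow_incr; lra).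
    assert (l ^ 2 <= (2 * R1) ^ 2) by (apply pow_incr; lra).
    assert (0 <= R2 ^ 3) by (apply pow_le; lra). assert (0 <= M ^ 2) by (apply pow_le; lra).
    assert (0 <= M ^ 3) by (apply pow_le; lra).
    assert (l ^ 3 * M ^ 2 + l ^ 2 * M ^ 3 <= 8 * R1 ^ 2 * M ^ 2 * (R1 + M)).
    { assert (l ^ 3 * M ^ 2 <= (2 * R1) ^ 3 * M ^ 2) by (apply Rmult_le_compat_r; auto).
      assert (l ^ 2 * M ^ 3 <= (2 * R1) ^ 2 * M ^ 3) by (apply Rmult_le_compat_r; auto).
      simpl in *. nra. }
    assert (0 <= KA * R2 ^ 3) by nra.
    replace (8 * KA * R2 ^ 3 * R1 ^ 2 * M ^ 2 * (R1 + M)) with (KA * R2 ^ 3 * (8 * R1 ^ 2 * M ^ 2 * (R1 + M))) by ring.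
    apply Rmult_le_compat_l; auto.
  - intros a b Ha Hb. apply supn_le_flo. rewrite Hn. auto.
Qed.

Lemma fin_ineq (c X Y Z : R) : 1 <= c -> 1 <= X -> 1 <= Y -> 1 <= Z ->
  8 * KA * (c * X) ^ 3 * (c * Y) ^ 2 * (c * Z) ^ 2 * (c * Y + c * Z) <=
  36 * KA * c ^ 8 * / Rmin Y Z * (X * Y * Z) ^ 3.
Proof.
  intros Hc HX HY HZ.
  assert (HKA : 0 < KA) by (unfold KA, KC; lra).
  assert (Hm : 0 < Rmin Y Z) by (apply Rmin_glb_lt; lra).
  assert (Hmm : Rmin Y Z * (Y + Z) <= 2 * Y * Z).
  { unfold Rmin. destruct (Rle_dec Y Z); nra. }
  assert (E : 36 * KA * c ^ 8 * / Rmin Y Z * (X * Y * Z) ^ 3 =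
              36 * KA * c ^ 8 * X ^ 3 * Y ^ 2 * Z ^ 2 * (Y * Z / Rmin Y Z)) by (field; lra).
  rewrite E.
  replace (8 * KA * (c * X) ^ 3 * (c * Y) ^ 2 * (c * Z) ^ 2 * (c * Y + c * Z)) with
    (8 * KA * c ^ 8 * X ^ 3 * Y ^ 2 * Z ^ 2 * (Y + Z)) by ring.
  assert (HP : 0 <= KA * c ^ 8 * X ^ 3 * Y ^ 2 * Z ^ 2).
  { repeat apply Rmult_le_pos; try lra; apply pow_le; lra. }
  assert (Y + Z <= 2 * (Y * Z / Rmin Y Z)).
  { apply Rmult_le_reg_r with (Rmin Y Z); auto. field_simplify; lra. }
  assert (0 <= Y * Z / Rmin Y Z) by (apply Rle_mult_inv_pos; nra).
  nra.
Qed.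


Lemma sim_le c N n : 1 <= N -> 1 <= c -> sim c N n -> znorm n <= c * N.
Proof. intros HN Hc [[-> H]|[H1 [H2 H3]]]; lra. Qed.

Lemma sgn_P s : sgnP (sgn s).
Proof. destruct s; simpl; [left|right]; auto. Qed.

Lemma dy_ge1 k : 1 <= dy k.
Proof. unfold dy. apply pow_R1_Rle. lra. Qed.

Ltac inj_tac :=
  let a1 := fresh in let a2 := fresh in let a3 := fresh in
  let b1 := fresh in let b2 := fresh in let b3 := fresh in let E := fresh in
  intros [[a1 a2] a3] [[b1 b2] b3] _ _ E;
  destruct a1 as [[? ?] ?], a2 as [[? ?] ?], a3 as [[? ?] ?], b1 as [[? ?] ?], b2 as [[? ?] ?], b3 as [[? ?] ?];
  simpl in E; inversion E; repeat f_equal; lia.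

Ltac vec_eq := repeat match goal with v : Z3 |- _ => destruct v as [[? ?] ?] end; simpl; f_equal; [f_equal|]; lia.

Theorem proposition4p18 :
  forall c : R, 2 <= c ->
  exists C : R, 0 < C /\
  forall (s123 s1 s2 s3 : bool) (k1 k2 k3 k12 k123 : nat) (m : Z),
    let N1 := dy k1 in let N2 := dy k2 in let N3 := dy k3 in
    let N12 := dy k12 in let N123 := dy k123 in
    let res := fun n : Z3 * Z3 * Z3 =>
      let '(n1, n2, n3) := n in Rabs (phi s123 s1 s2 s3 n1 n2 n3 - IZR m) <= 1 in
    (* (i) *)
    card_le (fun n : Z3 * Z3 * Z3 => let '(n1, n2, n3) := n in
               res n /\ sim c N1 n1 /\ sim c N2 n2 /\ sim c N3 n3)
      (C * / med N1 N2 N3 * (N1 * N2 * N3) ^ 3) /\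
    (* (ii) *)
    card_le (fun n : Z3 * Z3 * Z3 => let '(n1, n2, n3) := n in
               res n /\ sim c N123 (vadd (vadd n1 n2) n3) /\ sim c N1 n1 /\ sim c N2 n2)
      (C * / med N123 N1 N2 * (N123 * N1 * N2) ^ 3) /\
    (* (iii) *)
    card_le (fun n : Z3 * Z3 * Z3 => let '(n1, n2, n3) := n in
               res n /\ sim c N123 (vadd (vadd n1 n2) n3) /\ sim c N12 (vadd n1 n2)
               /\ sim c N1 n1)
      (C * / Rmin N12 (Rmax N123 N1) * (N123 * N12 * N1) ^ 3) /\
    (* (iv) *)
    card_le (fun n : Z3 * Z3 * Z3 => let '(n1, n2, n3) := n in
               res n /\ sim c N12 (vadd n1 n2) /\ sim c N1 n1 /\ sim c N3 n3)
      (C * / Rmin N12 (Rmax N1 N3) * (N12 * N1 * N3) ^ 3).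
Proof.
  intros c Hc. exists (36 * KA * c ^ 8). split.
  { assert (HKA : 0 < KA) by (unfold KA, KC; lra). apply Rmult_lt_0_compat; [lra|apply pow_lt; lra]. }
  intros s123 s1 s2 s3 k1 k2 k3 k12 k123 m N1 N2 N3 N12 N123 res.
  assert (HN1 : 1 <= N1) by apply dy_ge1. assert (HN2 : 1 <= N2) by apply dy_ge1.
  assert (HN3 : 1 <= N3) by apply dy_ge1. assert (HN12 : 1 <= N12) by apply dy_ge1.
  assert (HN123 : 1 <= N123) by apply dy_ge1.
  assert (Hc1 : 1 <= c) by lra.
  clearbody N1 N2 N3 N12 N123.
  pose proof (sgn_P s123) as P0. pose proof (sgn_P s1) as P1. pose proof (sgn_P s2) as P2. pose proof (sgn_P s3) as P3.
  split; [|split; [|split]].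
  -
    eapply card_le_mono; [|apply (partI_gen (sgn s123) (sgn s1) (sgn s2) (sgn s3) c N1 N2 N3 (IZR m)); auto].
    intros [[n1 n2] n3] [Hr [H1 [H2 H3]]]. unfold res in Hr. unfold phi in Hr.
    unfold PIp. repeat split; try solve [apply sim_le; auto]. exact Hr.
  -
    apply card_le_weak with (36 * KA * c ^ 8 * / med N1 N2 N123 * (N1 * N2 * N123) ^ 3).
    { right. rewrite (med_perm1 N1 N2 N123). ring. }
    apply card_le_inj with
       (g := fun n : Z3 * Z3 * Z3 => let '(n1, n2, n3) := n in (n1, n2, vopp (vadd (vadd n1 n2) n3)))
       (Q := PIp (sgn s3) (sgn s1) (sgn s2) (sgn s123) (c * N1) (c * N2) (c * N123) (IZR m)).
    + intros [[a1 a2] a3] [[b1 b2] b3] _ _ E. inversion E as [[E1 E2 E3]].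
      assert (a3 = b3).
      { destruct a1 as [[? ?] ?], a2 as [[? ?] ?], a3 as [[? ?] ?], b3 as [[? ?] ?].
        simpl in *. subst. inversion E3. f_equal; [f_equal|]; lia. }
      subst. auto.
    + intros [[n1 n2] n3] [Hr [H1 [H2 H3]]]. unfold res in Hr. unfold phi in Hr.
      cbv beta iota. unfold PIp. repeat split; try solve [apply sim_le; auto].
      * rewrite znorm_opp. apply sim_le; auto.
      * assert (E : vadd (vadd n1 n2) (vopp (vadd (vadd n1 n2) n3)) = vopp n3) by vec_eq.
        rewrite E, !jb_opp.
        replace (sgn s3 * jb n3 + sgn s1 * jb n1 + sgn s2 * jb n2 + sgn s123 * jb (vadd (vadd n1 n2) n3) - IZR m)
          with (sgn s123 * jb (vadd (vadd n1 n2) n3) + sgn s1 * jb n1 + sgn s2 * jb n2 + sgn s3 * jb n3 - IZR m) by ring.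
        exact Hr.
    + apply partI_gen; auto.
  -
    assert (HU1 : forall b a a' : Z3, vopp a = vopp a' -> a = a').
    { intros b [[? ?] ?] [[? ?] ?] E. simpl in E. inversion E. f_equal; [f_equal|]; lia. }
    destruct (Rle_dec N1 N123) as [Hle|Hlt].
    + rewrite Rmax_left by lra.
      apply card_le_weak with (8 * KA * (c * N1) ^ 3 * (c * N12) ^ 2 * (c * N123) ^ 2 * (c * N12 + c * N123)).
      { eapply Rle_trans; [apply (fin_ineq c N1 N12 N123); auto|]. right. ring. }
      apply card_le_inj with
        (g := fun n : Z3 * Z3 * Z3 => let '(n1, n2, n3) := n in (vadd n1 n2, n1, vadd (vadd n1 n2) n3))
        (Q := fun t : Z3 * Z3 * Z3 => let '(a, b, v) := t in
             znorm a <= c * N12 /\ znorm b <= c * N1 /\ znorm v <= c * N123 /\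
             Rabs (sgn s3 * jb (vadd (vopp a) v) + sgn s123 * jb v +
                   (sgn s1 * jb b + sgn s2 * jb (vadd a (vopp b))) - IZR m) <= 1).
      * inj_tac.
      * intros [[n1 n2] n3] [Hr [H1 [H2 H3]]]. unfold res in Hr. unfold phi in Hr.
        cbv beta iota. repeat split; try solve [apply sim_le; auto].
        assert (E1 : vadd (vopp (vadd n1 n2)) (vadd (vadd n1 n2) n3) = n3) by vec_eq.
        assert (E2 : vadd (vadd n1 n2) (vopp n1) = n2) by vec_eq.
        rewrite E1, E2.
        replace (sgn s3 * jb n3 + sgn s123 * jb (vadd (vadd n1 n2) n3) + (sgn s1 * jb n1 + sgn s2 * jb n2) - IZR m)
          with (sgn s123 * jb (vadd (vadd n1 n2) n3) + sgn s1 * jb n1 + sgn s2 * jb n2 + sgn s3 * jb n3 - IZR m) by ring.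
        exact Hr.
      * apply (asm_a (fun a b => vopp a)); auto; try nra. intros; apply znorm_opp.
    + rewrite Rmax_right by lra.
      apply card_le_weak with (8 * KA * (c * N123) ^ 3 * (c * N12) ^ 2 * (c * N1) ^ 2 * (c * N12 + c * N1)).
      { eapply Rle_trans; [apply (fin_ineq c N123 N12 N1); auto|]. right. ring. }
      apply card_le_inj with
        (g := fun n : Z3 * Z3 * Z3 => let '(n1, n2, n3) := n in (vadd n1 n2, vadd (vadd n1 n2) n3, n1))
        (Q := fun t : Z3 * Z3 * Z3 => let '(a, b, v) := t in
             znorm a <= c * N12 /\ znorm b <= c * N123 /\ znorm v <= c * N1 /\
             Rabs (sgn s2 * jb (vadd (vopp a) v) + sgn s1 * jb v +
                   (sgn s123 * jb b + sgn s3 * jb (vadd (vopp a) b)) - IZR m) <= 1).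
      * inj_tac.
      * intros [[n1 n2] n3] [Hr [H1 [H2 H3]]]. unfold res in Hr. unfold phi in Hr.
        cbv beta iota. repeat split; try solve [apply sim_le; auto].
        assert (E1 : vadd (vopp (vadd n1 n2)) n1 = vopp n2) by vec_eq.
        assert (E2 : vadd (vopp (vadd n1 n2)) (vadd (vadd n1 n2) n3) = n3) by vec_eq.
        rewrite E1, E2, jb_opp.
        replace (sgn s2 * jb n2 + sgn s1 * jb n1 + (sgn s123 * jb (vadd (vadd n1 n2) n3) + sgn s3 * jb n3) - IZR m)
          with (sgn s123 * jb (vadd (vadd n1 n2) n3) + sgn s1 * jb n1 + sgn s2 * jb n2 + sgn s3 * jb n3 - IZR m) by ring.
        exact Hr.
      * apply (asm_a (fun a b => vopp a)); auto; try nra. intros; apply znorm_opp.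
  -
    assert (HU1 : forall b a a' : Z3, vopp a = vopp a' -> a = a').
    { intros b [[? ?] ?] [[? ?] ?] E. simpl in E. inversion E. f_equal; [f_equal|]; lia. }
    destruct (Rle_dec N3 N1) as [Hle|Hlt].
    + rewrite Rmax_left by lra.
      apply card_le_weak with (8 * KA * (c * N3) ^ 3 * (c * N12) ^ 2 * (c * N1) ^ 2 * (c * N12 + c * N1)).
      { eapply Rle_trans; [apply (fin_ineq c N3 N12 N1); auto|]. right. ring. }
      apply card_le_inj with
        (g := fun n : Z3 * Z3 * Z3 => let '(n1, n2, n3) := n in (vadd n1 n2, n3, n1))
        (Q := fun t : Z3 * Z3 * Z3 => let '(a, b, v) := t in
             znorm a <= c * N12 /\ znorm b <= c * N3 /\ znorm v <= c * N1 /\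
             Rabs (sgn s2 * jb (vadd (vopp a) v) + sgn s1 * jb v +
                   (sgn s123 * jb (vadd a b) + sgn s3 * jb b) - IZR m) <= 1).
      * inj_tac.
      * intros [[n1 n2] n3] [Hr [H1 [H2 H3]]]. unfold res in Hr. unfold phi in Hr.
        cbv beta iota. repeat split; try solve [apply sim_le; auto].
        assert (E1 : vadd (vopp (vadd n1 n2)) n1 = vopp n2) by vec_eq.
        rewrite E1, jb_opp.
        replace (sgn s2 * jb n2 + sgn s1 * jb n1 + (sgn s123 * jb (vadd (vadd n1 n2) n3) + sgn s3 * jb n3) - IZR m)
          with (sgn s123 * jb (vadd (vadd n1 n2) n3) + sgn s1 * jb n1 + sgn s2 * jb n2 + sgn s3 * jb n3 - IZR m) by ring.
        exact Hr.
      * apply (asm_a (fun a b => vopp a)); auto; try nra. intros; apply znorm_opp.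
    + rewrite Rmax_right by lra.
      apply card_le_weak with (8 * KA * (c * N1) ^ 3 * (c * N12) ^ 2 * (c * N3) ^ 2 * (c * N12 + c * N3)).
      { eapply Rle_trans; [apply (fin_ineq c N1 N12 N3); auto|]. right. ring. }
      apply card_le_inj with
        (g := fun n : Z3 * Z3 * Z3 => let '(n1, n2, n3) := n in (vadd n1 n2, n1, n3))
        (Q := fun t : Z3 * Z3 * Z3 => let '(a, b, v) := t in
             znorm a <= c * N12 /\ znorm b <= c * N1 /\ znorm v <= c * N3 /\
             Rabs (sgn s123 * jb (vadd a v) + sgn s3 * jb v +
                   (sgn s1 * jb b + sgn s2 * jb (vadd a (vopp b))) - IZR m) <= 1).
      * inj_tac.
      * intros [[n1 n2] n3] [Hr [H1 [H2 H3]]]. unfold res in Hr. unfold phi in Hr.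
        cbv beta iota. repeat split; try solve [apply sim_le; auto].
        assert (E2 : vadd (vadd n1 n2) (vopp n1) = n2) by vec_eq.
        rewrite E2.
        replace (sgn s123 * jb (vadd (vadd n1 n2) n3) + sgn s3 * jb n3 + (sgn s1 * jb n1 + sgn s2 * jb n2) - IZR m)
          with (sgn s123 * jb (vadd (vadd n1 n2) n3) + sgn s1 * jb n1 + sgn s2 * jb n2 + sgn s3 * jb n3 - IZR m) by ring.
        exact Hr.
      * apply (asm_a (fun a b => a)); auto; try nra.
Qed.
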